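(* Let $u\in C^2(\Omega)$ on a domain $\Omega\subset\mathbb{R}^2$, let $S(u)=\{(x,y)\in\Omega:u_x-y=0,\ u_y+x=0\}$, and on $\Omega\setminus S(u)$ let $N(u)=(u_x-y,u_y+x)/\sqrt{(u_x-y)^2+(u_y+x)^2}$. Let $\Gamma_s\subset S(u)$ be a $C^1$ smooth curve, $p_0\in\Gamma_s$, and suppose there is a ball $B_\epsilon(p_0)\subset\Omega$ such that $B_\epsilon(p_0)\setminus(\Gamma_s\cap B_\epsilon(p_0))=B^+\cup B^-$ where $B^+,B^-$ are disjoint domains (connected open sets) containing no points of $S(u)$. Then both limits $N(u)(p_0^+)=\lim_{p\in B^+,\,p\to p_0}N(u)(p)$ and $N(u)(p_0^-)=\lim_{p\in B^-,\,p\to p_0}N(u)(p)$ exist, and $N(u)(p_0^+)=-N(u)(p_0^-)$. *)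

(* Defs.v *)
From Stdlib Require Import Reals.
From Coquelicot Require Import Coquelicot.
Open Scope R_scope.

Definition disk (p0 : R * R) (eps : R) (p : R * R) : Prop :=
  (fst p - fst p0) ^ 2 + (snd p - snd p0) ^ 2 < eps ^ 2.

Definition open2 (A : R * R -> Prop) : Prop :=
  forall p, A p -> exists e, 0 < e /\ (forall q, disk p e q -> A q).

Definition connected2 (A : R * R -> Prop) : Prop :=
  forall U V : R * R -> Prop, open2 U -> open2 V ->
    (forall p, A p -> U p \/ V p) ->
    (exists p, A p /\ U p) -> (exists p, A p /\ V p) ->
    exists p, A p /\ U p /\ V p.

Definition domain2 (A : R * R -> Prop) : Prop :=
  open2 A /\ connected2 A /\ exists p, A p.

Definition dx (f : R -> R -> R) (x y : R) : R := Derive (fun t => f t y) x.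
Definition dy (f : R -> R -> R) (x y : R) : R := Derive (fun t => f x t) y.

Definition cont2 (f : R -> R -> R) (p : R * R) : Prop :=
  continuous (fun q : R * R => f (fst q) (snd q)) p.

Definition has_partials (f : R -> R -> R) (x y : R) : Prop :=
  ex_derive (fun t => f t y) x /\ ex_derive (fun t => f x t) y.

Definition C2_on (Om : R * R -> Prop) (u : R -> R -> R) : Prop :=
  forall x y, Om (x, y) ->
    has_partials u x y /\ has_partials (dx u) x y /\ has_partials (dy u) x y /\
    cont2 u (x, y) /\ cont2 (dx u) (x, y) /\ cont2 (dy u) (x, y) /\
    cont2 (dx (dx u)) (x, y) /\ cont2 (dy (dx u)) (x, y) /\
    cont2 (dx (dy u)) (x, y) /\ cont2 (dy (dy u)) (x, y).

Definition Sing (Om : R * R -> Prop) (u : R -> R -> R) (p : R * R) : Prop :=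
  Om p /\ dx u (fst p) (snd p) - snd p = 0 /\ dy u (fst p) (snd p) + fst p = 0.

(* Unit vector field N(u) (meaningful off S(u)). *)
Definition Nu (u : R -> R -> R) (p : R * R) : R * R :=
  let a := dx u (fst p) (snd p) - snd p in
  let b := dy u (fst p) (snd p) + fst p in
  (a / sqrt (a ^ 2 + b ^ 2), b / sqrt (a ^ 2 + b ^ 2)).

Definition regular_C1_curve (g1 g2 : R -> R) (a b : R) : Prop :=
  a < b /\
  (forall t, a < t < b ->
     ex_derive g1 t /\ ex_derive g2 t /\
     continuous (Derive g1) t /\ continuous (Derive g2) t /\
     (Derive g1 t, Derive g2 t) <> (0, 0)) /\
  (forall s t, a < s < b -> a < t < b -> (g1 s, g2 s) = (g1 t, g2 t) -> s = t).

Definition trace (g1 g2 : R -> R) (a b : R) (p : R * R) : Prop :=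
  exists t, a < t < b /\ p = (g1 t, g2 t).

(* Main.v *)
Require Import Defs.
From Stdlib Require Import Reals Lra Lia ClassicalEpsilon Classical.
From Coquelicot Require Import Coquelicot.
Open Scope R_scope.


Lemma Ceq (x y : Complex.C) : fst x = fst y -> snd x = snd y -> x = y.
Proof. destruct x, y; simpl; intros -> ->; reflexivity. Qed.

Lemma Cdiff_sq (r s : Complex.C) : (r*r - s*s)%C = ((r - s)*(r + s))%C.
Proof. destruct r, s; apply Ceq; simpl; ring. Qed.

Lemma Cmod_sym (x y : Complex.C) : Cmod (x - y) = Cmod (y - x).
Proof. replace (y - x)%C with (- (x - y))%C. apply eq_sym, Cmod_opp.
  destruct x, y; apply Ceq; simpl; ring. Qed.

Lemma Cmod_tri (x y z : Complex.C) : Cmod (x - z) <= Cmod (x - y) + Cmod (y - z).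
Proof. replace (x - z)%C with ((x - y) + (y - z))%C. apply Cmod_triangle.
  destruct x, y, z; apply Ceq; simpl; ring. Qed.

Lemma Cmod_sqr (x : Complex.C) : Cmod x ^ 2 = fst x ^ 2 + snd x ^ 2.
Proof. unfold Cmod. rewrite pow2_sqrt; [reflexivity|]. nra. Qed.

Lemma Cmod_unit_iff (x : Complex.C) : Cmod x = 1 <-> fst x ^ 2 + snd x ^ 2 = 1.
Proof. split; intro H.
  - rewrite <- Cmod_sqr, H; ring.
  - unfold Cmod; rewrite H; apply sqrt_1. Qed.

Definition csq (g : Complex.C) : Complex.C :=
  (sqrt ((1 + fst g)/2),
   if Rle_dec 0 (snd g) then sqrt ((1 - fst g)/2) else - sqrt ((1 - fst g)/2)).

Lemma csq_spec g : Cmod g = 1 -> (csq g * csq g)%C = g /\ Cmod (csq g) = 1.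
Proof.
  intro H. apply Cmod_unit_iff in H. destruct g as [x y]; simpl in H.
  assert (Hx : -1 <= x <= 1) by nra.
  assert (HA : 0 <= (1 + x)/2) by lra.
  assert (HB : 0 <= (1 - x)/2) by lra.
  assert (Hs : sqrt ((1 + x)/2) * sqrt ((1 - x)/2) = Rabs y / 2).
  { rewrite <- sqrt_mult by lra.
    replace ((1 + x) / 2 * ((1 - x) / 2)) with ((Rabs y / 2)^2).
    apply sqrt_pow2. apply Rmult_le_pos; [apply Rabs_pos|lra].
    replace ((Rabs y / 2)^2) with (Rabs y ^ 2 / 4) by field. rewrite pow2_abs. nra. }
  unfold csq; simpl. split.
  - apply Ceq; simpl; destruct (Rle_dec 0 y) as [Hy|Hy].
    + replace (sqrt ((1 + x) / 2) * sqrt ((1 + x) / 2)) with ((1+x)/2) by (rewrite sqrt_sqrt; lra).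
      replace (sqrt ((1 - x) / 2) * sqrt ((1 - x) / 2)) with ((1-x)/2) by (rewrite sqrt_sqrt; lra).
      lra.
    + replace (sqrt ((1 + x) / 2) * sqrt ((1 + x) / 2)) with ((1+x)/2) by (rewrite sqrt_sqrt; lra).
      replace (- sqrt ((1 - x) / 2) * - sqrt ((1 - x) / 2)) with ((1-x)/2) by (rewrite Rmult_opp_opp, sqrt_sqrt; lra).
      lra.
    + rewrite Rabs_right in Hs by lra. nra.
    + rewrite Rabs_left in Hs by lra. nra.
  - apply Cmod_unit_iff; simpl.
    assert (E1 := pow2_sqrt ((1+x)/2) HA). assert (E2 := pow2_sqrt ((1-x)/2) HB).
    destruct (Rle_dec 0 y); nra.
Qed.


Lemma Cmod_2x (r : Complex.C) : Cmod (r + r) = 2 * Cmod r.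
Proof. replace (r + r)%C with (RtoC 2 * r)%C. rewrite Cmod_mult, Cmod_R, Rabs_right; lra.
  destruct r; apply Ceq; simpl; ring. Qed.

Lemma K1 (rho r : Complex.C) : Cmod rho = 1 -> Cmod r = 1 -> Cmod (r - rho) < 1 ->
  Cmod (r - rho) <= Cmod (r*r - rho*rho).
Proof.
  intros H1 H2 H3. rewrite Cdiff_sq, Cmod_mult.
  assert (Cmod (rho + rho) <= Cmod (rho - r) + Cmod (r + rho)).
  { replace (rho + rho)%C with ((rho - r) + (r + rho))%C by (destruct rho, r; apply Ceq; simpl; ring).
    apply Cmod_triangle. }
  rewrite Cmod_2x, Cmod_sym in H. pose proof (Cmod_ge_0 (r - rho)). nra.
Qed.

Definition adj (rho r : Complex.C) : Complex.C :=
  if Rlt_dec (Cmod (r - rho)) 1 then r else (- r)%C.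

Lemma adj_spec rho r : Cmod rho = 1 -> Cmod r = 1 -> Cmod (r*r - rho*rho) < 1/8 ->
  Cmod (adj rho r) = 1 /\ (adj rho r * adj rho r)%C = (r * r)%C /\
  Cmod (adj rho r - rho) <= Cmod (r*r - rho*rho).
Proof.
  intros H1 H2 H3. unfold adj. destruct (Rlt_dec (Cmod (r - rho)) 1) as [h|h].
  - split; [auto|split; [auto|]]. apply K1; auto.
  - assert (E : (-r * -r)%C = (r*r)%C) by (destruct r; apply Ceq; simpl; ring).
    rewrite E. split; [rewrite Cmod_opp; auto|split; [auto|]].
    rewrite <- E. apply K1; auto. rewrite Cmod_opp; auto.
    rewrite Cdiff_sq, Cmod_mult in H3.
    replace (-r - rho)%C with (- (r + rho))%C by (destruct r, rho; apply Ceq; simpl; ring).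
    rewrite Cmod_opp. pose proof (Cmod_ge_0 (r + rho)). nra.
Qed.

Lemma K3 (r1 r2 : Complex.C) : Cmod r1 = 1 -> (r1 * r1)%C = (r2 * r2)%C -> Cmod (r1 - r2) < 2 -> r1 = r2.
Proof.
  intros H1 H2 H3.
  assert (E : ((r1 - r2) * (r1 + r2))%C = 0%C) by (rewrite <- Cdiff_sq, H2; destruct r2; apply Ceq; simpl; ring).
  apply (f_equal Cmod) in E. rewrite Cmod_mult, Cmod_0 in E.
  destruct (Rmult_integral _ _ E) as [E'|E'].
  - apply Cmod_eq_0 in E'. destruct r1, r2; injection E'; intros; apply Ceq; simpl in *; lra.
  - apply Cmod_eq_0 in E'. exfalso.
    replace (r1 - r2)%C with (r1 + r1)%C in H3 by (destruct r1, r2; injection E'; intros; apply Ceq; simpl in *; lra).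
    rewrite Cmod_2x in H3. lra.
Qed.


Definition pt (c p : Complex.C) (s : R) : Complex.C :=
  (fst c + s * (fst p - fst c), snd c + s * (snd p - snd c)).

Fixpoint chain (G : Complex.C -> Complex.C) (c p : Complex.C) (n : nat) (k : nat) : Complex.C :=
  match k with
  | O => csq (G c)
  | S k' => adj (chain G c p n k') (csq (G (pt c p (INR (S k') / INR n))))
  end.

Definition good (G : Complex.C -> Complex.C) (c p : Complex.C) (n : nat) : Prop :=
  (0 < n)%nat /\ forall s s', 0 <= s <= 1 -> 0 <= s' <= 1 -> Rabs (s - s') <= / INR n ->
    Cmod (G (pt c p s) - G (pt c p s')) < 1/8.

Lemma pt0 c p : pt c p 0 = c.
Proof. destruct c; apply Ceq; simpl; ring. Qed.
Lemma pt1 c p : pt c p 1 = p.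
Proof. destruct c, p; apply Ceq; simpl; ring. Qed.

Lemma pt_diff c p1 p2 s t :
  Cmod (pt c p1 s - pt c p2 t) <= Rabs (s - t) * Cmod (p2 - c) + Rabs s * Cmod (p1 - p2).
Proof.
  replace (pt c p1 s - pt c p2 t)%C with (RtoC (s - t) * (p2 - c) + RtoC s * (p1 - p2))%C.
  - eapply Rle_trans; [apply Cmod_triangle|]. rewrite !Cmod_mult, !Cmod_R. lra.
  - destruct c, p1, p2; apply Ceq; simpl; ring.
Qed.

Lemma pt_in c p Rr s : Cmod (p - c) < Rr -> 0 <= s <= 1 -> Cmod (pt c p s - c) < Rr.
Proof.
  intros H Hs. replace (pt c p s - c)%C with (RtoC s * (p - c))%C.
  - rewrite Cmod_mult, Cmod_R, Rabs_right by lra. pose proof (Cmod_ge_0 (p - c)). nra.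
  - destruct c, p; apply Ceq; simpl; ring.
Qed.

Lemma frac01 k n : (k <= n)%nat -> (0 < n)%nat -> 0 <= INR k / INR n <= 1.
Proof.
  intros H1 H2. apply le_INR in H1. apply lt_0_INR in H2. pose proof (pos_INR k).
  split. apply Rdiv_le_0_compat; lra.
  apply (Rmult_le_reg_r (INR n)); auto. unfold Rdiv. rewrite Rmult_assoc, Rinv_l by lra. lra.
Qed.

Lemma frac_step k n : (0 < n)%nat -> Rabs (INR (S k) / INR n - INR k / INR n) <= / INR n.
Proof.
  intros H. apply lt_0_INR in H. rewrite S_INR.
  replace ((INR k + 1) / INR n - INR k / INR n) with (/ INR n) by (field; lra).
  rewrite Rabs_right. lra. apply Rle_ge, Rlt_le, Rinv_0_lt_compat; lra.
Qed.



Definition unitD (G : Complex.C -> Complex.C) c Rr := forall q, Cmod (q - c) < Rr -> Cmod (G q) = 1.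

Lemma good_bound G c p n s s' : good G c p n -> 0 <= s <= 1 -> 0 <= s' <= 1 -> Rabs (s - s') <= / INR n ->
    Cmod (G (pt c p s) - G (pt c p s')) < 1/8.
Proof. intros [_ H]; apply H. Qed.

Lemma chain_spec G c p n Rr : unitD G c Rr -> Cmod (p - c) < Rr -> good G c p n ->
  forall k, (k <= n)%nat ->
  Cmod (chain G c p n k) = 1 /\ (chain G c p n k * chain G c p n k)%C = G (pt c p (INR k / INR n)).
Proof.
  intros HU Hp Hg. pose proof (proj1 Hg) as Hn. induction k as [|k IH]; intros Hk.
  - simpl. replace (0 / INR n) with 0 by (unfold Rdiv; ring). rewrite pt0.
    destruct (csq_spec (G c)) as [A B]. apply HU. replace (c - c)%C with (RtoC 0) by (destruct c; apply Ceq; simpl; ring).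
    rewrite Cmod_R, Rabs_R0. pose proof (Cmod_ge_0 (p - c)); lra.
    auto.
  - destruct IH as [I1 I2]; [lia|]. cbn [chain].
    set (g := G (pt c p (INR (S k) / INR n))).
    assert (Hgu : Cmod g = 1) by (apply HU, pt_in; [auto|]; apply (frac01 (S k) n); auto).
    destruct (csq_spec g Hgu) as [S1 S2].
    destruct (adj_spec (chain G c p n k) (csq g)) as [A1 [A2 A3]]; auto.
    + rewrite S1, I2. apply (good_bound G c p n); auto; try (apply frac01; lia). apply frac_step; auto.
    + split; auto. rewrite A2; auto.
Qed.

Lemma chain_step G c p n Rr k : unitD G c Rr -> Cmod (p - c) < Rr -> good G c p n -> (S k <= n)%nat ->
  Cmod (chain G c p n (S k) - chain G c p n k) <=
  Cmod (G (pt c p (INR (S k) / INR n)) - G (pt c p (INR k / INR n))).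
Proof.
  intros HU Hp Hg Hk. pose proof (proj1 Hg) as Hn.
  destruct (chain_spec G c p n Rr HU Hp Hg k) as [I1 I2]; [lia|]. cbn [chain].
  set (g := G (pt c p (INR (S k) / INR n))).
  assert (Hgu : Cmod g = 1) by (apply HU, pt_in; [auto|]; apply (frac01 (S k) n); auto).
  destruct (csq_spec g Hgu) as [S1 S2].
  destruct (adj_spec (chain G c p n k) (csq g)) as [A1 [A2 A3]]; auto.
  + rewrite S1, I2. apply (good_bound G c p n); auto; try (apply frac01; lia). apply frac_step; auto.
  + rewrite S1, I2 in A3. exact A3.
Qed.


Lemma frac_close j i n m : (0 < n)%nat -> (0 < m)%nat -> (i <= m)%nat ->
  Rabs (INR (j*m+i) / INR (n*m) - INR j / INR n) <= / INR n.
Proof.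
  intros Hn Hm Hi. apply lt_0_INR in Hn, Hm. apply le_INR in Hi. pose proof (pos_INR i).
  rewrite plus_INR, !mult_INR.
  replace ((INR j * INR m + INR i) / (INR n * INR m) - INR j / INR n) with (INR i / (INR n * INR m)) by (field; lra).
  rewrite Rabs_right. 2: apply Rle_ge, Rdiv_le_0_compat; nra.
  replace (/ INR n) with (INR m / (INR n * INR m)) by (field; lra).
  unfold Rdiv. apply Rmult_le_compat_r; auto. apply Rlt_le, Rinv_0_lt_compat; nra.
Qed.

Lemma frac_eq j n m : (0 < n)%nat -> (0 < m)%nat -> INR (j*m) / INR (n*m) = INR j / INR n.
Proof. intros Hn Hm. apply lt_0_INR in Hn, Hm. rewrite !mult_INR. field; lra. Qed.

Lemma good_mul G c p n m : good G c p n -> (0 < m)%nat -> good G c p (n*m).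
Proof.
  intros [Hn H] Hm. split. lia. intros s s' Hs Hs' Hss. apply H; auto.
  eapply Rle_trans; [exact Hss|]. apply lt_0_INR in Hn. apply lt_0_INR in Hm as Hm'.
  apply Rinv_le_contravar; auto. rewrite mult_INR.
  assert (1 <= INR m) by (apply (le_INR 1); lia). nra.
Qed.

Lemma chain_ref G c p n m Rr : unitD G c Rr -> Cmod (p - c) < Rr -> good G c p n -> (0 < m)%nat ->
  forall j, (j <= n)%nat -> chain G c p (n*m) (j*m) = chain G c p n j.
Proof.
  intros HU Hp Hg Hm. pose proof (proj1 Hg) as Hn. pose proof (good_mul _ _ _ _ _ Hg Hm) as HgN.
  induction j as [|j IH]; intros Hj.
  - reflexivity.
  - assert (IH' := IH ltac:(lia)).
    set (cj := chain G c p n j).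
    assert (Inner : forall i, (i <= m)%nat ->
      Cmod (chain G c p (n*m) (j*m+i) - cj) <=
      Cmod (G (pt c p (INR (j*m+i) / INR (n*m))) - G (pt c p (INR j / INR n)))).
    { induction i as [|i IHi]; intros Hi.
      - rewrite Nat.add_0_r, IH'. fold cj. replace (cj - cj)%C with (RtoC 0) by (destruct cj; apply Ceq; simpl; ring).
        rewrite Cmod_R, Rabs_R0. apply Cmod_ge_0.
      - assert (IHi' := IHi ltac:(lia)).
        rewrite Nat.add_succ_r.
        destruct (chain_spec G c p (n*m) Rr HU Hp HgN (S (j*m+i))) as [A1 A2]; [nia|].
        destruct (chain_spec G c p n Rr HU Hp Hg j) as [B1 B2]; [lia|].
        assert (St := chain_step G c p (n*m) Rr (j*m+i) HU Hp HgN ltac:(nia)).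
        assert (b1 : Cmod (G (pt c p (INR (S (j*m+i)) / INR (n*m))) - G (pt c p (INR (j*m+i) / INR (n*m)))) < 1/8).
        { apply (good_bound G c p (n*m)); auto; try (apply frac01; nia). apply frac_step. nia. }
        assert (b2 : Cmod (G (pt c p (INR (j*m+i) / INR (n*m))) - G (pt c p (INR j / INR n))) < 1/8).
        { apply (good_bound G c p n); auto; try (apply frac01; nia). apply frac_close; lia. }
        assert (Hlt : Cmod (chain G c p (n*m) (S (j*m+i)) - cj) < 1).
        { eapply Rle_lt_trans; [apply Cmod_tri with (y := chain G c p (n*m) (j*m+i))|]. lra. }
        eapply Rle_trans; [apply K1; auto|]. rewrite A2. fold cj in B2. rewrite B2. lra. }
    assert (I := Inner m (le_n m)).
    replace (S j * m)%nat with (j*m+m)%nat by lia.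
    destruct (chain_spec G c p (n*m) Rr HU Hp HgN (j*m+m)) as [A1 A2]; [nia|].
    destruct (chain_spec G c p n Rr HU Hp Hg (S j)) as [B1 B2]; [lia|].
    assert (St := chain_step G c p n Rr j HU Hp Hg Hj).
    assert (b2 : Cmod (G (pt c p (INR (j*m+m) / INR (n*m))) - G (pt c p (INR j / INR n))) < 1/8).
    { apply (good_bound G c p n); auto; try (apply frac01; nia). apply frac_close; lia. }
    assert (b1 : Cmod (G (pt c p (INR (S j) / INR n)) - G (pt c p (INR j / INR n))) < 1/8).
    { apply (good_bound G c p n); auto; try (apply frac01; nia). apply frac_step. lia. }
    apply K3; auto.
    + rewrite A2, B2. replace (j*m+m)%nat with (S j * m)%nat by lia. rewrite frac_eq; auto.
    + eapply Rle_lt_trans; [apply Cmod_tri with (y := cj)|].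
      rewrite (Cmod_sym cj). fold cj in St. lra.
Qed.

Lemma chain_inv G c p n m Rr : unitD G c Rr -> Cmod (p - c) < Rr -> good G c p n -> good G c p m ->
  chain G c p n n = chain G c p m m.
Proof.
  intros HU Hp Hn Hm.
  rewrite <- (chain_ref G c p n m Rr HU Hp Hn (proj1 Hm) n (le_n n)).
  rewrite <- (chain_ref G c p m n Rr HU Hp Hm (proj1 Hn) m (le_n m)).
  rewrite (Nat.mul_comm m n). reflexivity.
Qed.


Definition contD (G : Complex.C -> Complex.C) c Rr := forall q, Cmod (q - c) < Rr ->
  forall e, 0 < e -> exists d, 0 < d /\ forall z, Cmod (z - q) < d -> Cmod (G z - G q) < e.

Lemma uni G c Rr p : unitD G c Rr -> contD G c Rr -> Cmod (p - c) < Rr ->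
  exists n r, (0 < n)%nat /\ 0 < r /\ r <= Rr - Cmod (p - c) /\
   forall p1 p2, Cmod (p1 - p) < r -> Cmod (p2 - p) < r ->
   forall s s', 0 <= s <= 1 -> 0 <= s' <= 1 -> Rabs (s - s') <= / INR n ->
   Cmod (G (pt c p1 s) - G (pt c p2 s')) < 1/8.
Proof.
  intros HU HC Hp.
  set (K := 2 * Cmod (p - c) + 2).
  assert (HK : 0 < K) by (unfold K; pose proof (Cmod_ge_0 (p - c)); lra).
  set (P := fun t d => 0 < d /\ (0 <= t <= 1 -> forall z, Cmod (z - pt c p t) < d ->
                        Cmod (G z - G (pt c p t)) < 1/32)).
  assert (Pex : forall t, exists d, P t d).
  { intro t. destruct (classic (0 <= t <= 1)) as [Ht|Ht].
    - destruct (HC (pt c p t) (pt_in c p Rr t Hp Ht) (1/32) ltac:(lra)) as [d [Hd1 Hd2]].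
      exists d; split; auto.
    - exists 1; split; [lra|]. intro; contradiction. }
  set (f := fun t => epsilon (inhabits 1) (P t)).
  assert (fP : forall t, P t (f t)) by (intro t; apply epsilon_spec, Pex).
  assert (fpos : forall t, 0 < f t / K) by (intro t; destruct (fP t); apply Rdiv_lt_0_compat; auto).
  set (delta := fun t => mkposreal (f t / K) (fpos t)).
  destruct (compactness_value_1d 0 1 delta) as [d Hd].
  destruct (archimed_cor1 d (cond_pos d)) as [N [HN1 HN2]].
  exists N, (Rmin d (Rr - Cmod (p - c))).
  split; auto. split. apply Rmin_pos; [apply cond_pos|lra]. split. apply Rmin_r.
  intros p1 p2 H1 H2 s s' Hs Hs' Hss.
  assert (Hr : Rmin d (Rr - Cmod (p - c)) <= d) by apply Rmin_l.
  destruct (classic (exists t, 0 <= t <= 1 /\ Rabs (s - t) < delta t /\ d <= delta t)) as [[t [Ht1 [Ht2 Ht3]]]|Hno];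
   [|exfalso; exact (Hd s Hs Hno)].
  simpl in Ht2, Ht3. destruct (fP t) as [ft1 ft2].
  assert (E : f t / K * K = f t) by (field; lra).
  pose proof (Cmod_ge_0 (p - c)) as Hpc.
  assert (A1 : Cmod (pt c p1 s - pt c p t) < f t).
  { eapply Rle_lt_trans; [apply pt_diff|].
    assert (Rabs s <= 1) by (rewrite Rabs_right; lra).
    pose proof (Cmod_ge_0 (p1 - p)).
    assert (Rabs (s - t) * Cmod (p - c) <= f t / K * Cmod (p - c)) by (apply Rmult_le_compat_r; lra).
    assert (Rabs s * Cmod (p1 - p) < f t / K).
    { apply Rle_lt_trans with (1 * Cmod (p1 - p)). apply Rmult_le_compat_r; auto with real. lra. }
    assert (f t / K * (Cmod (p - c) + 1) <= f t / K * K) by (apply Rmult_le_compat_l; [left; apply fpos|unfold K; lra]).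
    lra. }
  assert (A2 : Cmod (pt c p2 s' - pt c p t) < f t).
  { eapply Rle_lt_trans; [apply pt_diff|].
    assert (Rabs s' <= 1) by (rewrite Rabs_right; lra).
    pose proof (Cmod_ge_0 (p2 - p)).
    assert (Rabs (s' - t) <= 2 * (f t / K)).
    { replace (s' - t) with ((s' - s) + (s - t)) by ring.
      eapply Rle_trans; [apply Rabs_triang|]. rewrite Rabs_minus_sym in Hss. lra. }
    assert (Rabs (s' - t) * Cmod (p - c) <= 2 * (f t / K) * Cmod (p - c)) by (apply Rmult_le_compat_r; lra).
    assert (Rabs s' * Cmod (p2 - p) < f t / K).
    { apply Rle_lt_trans with (1 * Cmod (p2 - p)). apply Rmult_le_compat_r; auto with real. lra. }
    assert (f t / K * (2 * Cmod (p - c) + 1) <= f t / K * K) by (apply Rmult_le_compat_l; [left; apply fpos|unfold K; lra]).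
    lra. }
  assert (B1 := ft2 Ht1 _ A1). assert (B2 := ft2 Ht1 _ A2).
  eapply Rle_lt_trans; [apply Cmod_tri with (y := G (pt c p t))|]. rewrite (Cmod_sym (G (pt c p t))). lra.
Qed.

Definition nsel G c p := epsilon (inhabits 0%nat) (good G c p).
Definition liftH G c p := chain G c p (nsel G c p) (nsel G c p).

Lemma nsel_good G c Rr p : unitD G c Rr -> contD G c Rr -> Cmod (p - c) < Rr -> good G c p (nsel G c p).
Proof.
  intros HU HC Hp. unfold nsel. apply epsilon_spec.
  destruct (uni G c Rr p HU HC Hp) as [n [r [Hn [Hr [_ H]]]]].
  exists n. split; auto. intros. apply H; auto; replace (p - p)%C with (RtoC 0) by (destruct p; apply Ceq; simpl; ring);
    rewrite Cmod_R, Rabs_R0; auto.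
Qed.

Lemma liftH_spec G c Rr p : unitD G c Rr -> contD G c Rr -> Cmod (p - c) < Rr ->
  Cmod (liftH G c p) = 1 /\ (liftH G c p * liftH G c p)%C = G p.
Proof.
  intros HU HC Hp. pose proof (nsel_good G c Rr p HU HC Hp) as Hg.
  destruct (chain_spec G c p _ Rr HU Hp Hg (nsel G c p) (le_n _)) as [A B].
  unfold liftH. split; auto. rewrite B. f_equal. replace (INR (nsel G c p) / INR (nsel G c p)) with 1.
  apply pt1. field. apply not_0_INR. pose proof (proj1 Hg); lia.
Qed.

Lemma liftH_cont G c Rr : unitD G c Rr -> contD G c Rr -> contD (liftH G c) c Rr.
Proof.
  intros HU HC p Hp e He.
  destruct (uni G c Rr p HU HC Hp) as [n [r [Hn [Hr [Hr2 H]]]]].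
  destruct (HC p Hp e He) as [d1 [Hd1 Hd1']].
  exists (Rmin r d1). split. apply Rmin_pos; auto. intros q Hq.
  assert (Hqr : Cmod (q - p) < r) by (eapply Rlt_le_trans; [exact Hq|apply Rmin_l]).
  assert (Hqd : Cmod (q - p) < d1) by (eapply Rlt_le_trans; [exact Hq|apply Rmin_r]).
  assert (Hpp : Cmod (p - p) < r) by (replace (p - p)%C with (RtoC 0) by (destruct p; apply Ceq; simpl; ring);
    rewrite Cmod_R, Rabs_R0; auto).
  assert (HqD : Cmod (q - c) < Rr) by (eapply Rle_lt_trans; [apply Cmod_tri with (y := p)|]; lra).
  assert (gq : good G c q n) by (split; auto).
  assert (gp : good G c p n) by (split; auto).
  assert (Eq : liftH G c q = chain G c q n n) by (apply (chain_inv G c q _ _ Rr); auto; apply (nsel_good G c Rr); auto).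
  assert (Ep : liftH G c p = chain G c p n n) by (apply (chain_inv G c p _ _ Rr); auto; apply (nsel_good G c Rr); auto).
  assert (Cmp : forall k, (k <= n)%nat -> Cmod (chain G c q n k - chain G c p n k) <=
            Cmod (G (pt c q (INR k / INR n)) - G (pt c p (INR k / INR n)))).
  { induction k as [|k IH]; intros Hk.
    - simpl. replace (csq (G c) - csq (G c))%C with (RtoC 0) by (destruct (csq (G c)); apply Ceq; simpl; ring).
      rewrite Cmod_R, Rabs_R0. apply Cmod_ge_0.
    - assert (IH' := IH ltac:(lia)).
      destruct (chain_spec G c q n Rr HU HqD gq (S k)) as [A1 A2]; [lia|].
      destruct (chain_spec G c p n Rr HU Hp gp (S k)) as [B1 B2]; [lia|].
      assert (Sq := chain_step G c q n Rr k HU HqD gq Hk).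
      assert (Sp := chain_step G c p n Rr k HU Hp gp Hk).
      assert (F0 : 0 <= INR k / INR n <= 1) by (apply frac01; lia).
      assert (F1 : 0 <= INR (S k) / INR n <= 1) by (apply frac01; lia).
      assert (b1 : Cmod (G (pt c q (INR k / INR n)) - G (pt c p (INR k / INR n))) < 1/8).
      { apply H; auto. rewrite Rminus_diag, Rabs_R0. left; apply Rinv_0_lt_compat, lt_0_INR; auto. }
      assert (b2 : Cmod (G (pt c q (INR (S k) / INR n)) - G (pt c q (INR k / INR n))) < 1/8).
      { apply H; auto. apply frac_step; auto. }
      assert (b3 : Cmod (G (pt c p (INR (S k) / INR n)) - G (pt c p (INR k / INR n))) < 1/8).
      { apply H; auto. apply frac_step; auto. }
      eapply Rle_trans; [apply K1; auto|].
      + eapply Rle_lt_trans; [apply Cmod_tri with (y := chain G c q n k)|].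
        eapply Rle_lt_trans; [apply Rplus_le_compat_l, Cmod_tri with (y := chain G c p n k)|].
        rewrite (Cmod_sym (chain G c p n k)). lra.
      + rewrite A2, B2. lra. }
  rewrite Eq, Ep. eapply Rle_lt_trans; [apply Cmp; auto|].
  replace (INR n / INR n) with 1 by (field; apply not_0_INR; lia). rewrite !pt1. auto.
Qed.


Definition nrm (z : Complex.C) : Complex.C := (RtoC (/ Cmod z) * z)%C.

Lemma Cmod_pos_ne (z : Complex.C) : z <> RtoC 0 -> 0 < Cmod z.
Proof. intro H. destruct (Cmod_ge_0 z) as [h|h]; auto. exfalso; apply H, Cmod_eq_0; auto. Qed.

Lemma nrm_unit z : 0 < Cmod z -> Cmod (nrm z) = 1.
Proof. intro H. unfold nrm. rewrite Cmod_mult, Cmod_R, Rabs_right. field; lra.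
  apply Rle_ge, Rlt_le, Rinv_0_lt_compat; auto. Qed.

Lemma Cmod_rev (x y : Complex.C) : Rabs (Cmod x - Cmod y) <= Cmod (x - y).
Proof.
  assert (A : Cmod x <= Cmod (x - y) + Cmod y).
  { replace x with ((x - y) + y)%C at 1 by (destruct x, y; apply Ceq; simpl; ring). apply Cmod_triangle. }
  assert (B : Cmod y <= Cmod (x - y) + Cmod x).
  { replace y with (- (x - y) + x)%C at 1 by (destruct x, y; apply Ceq; simpl; ring).
    eapply Rle_trans; [apply Cmod_triangle|]. rewrite Cmod_opp. lra. }
  apply Rabs_le. lra.
Qed.

Lemma Cmod_scal (r : R) (z : Complex.C) : Cmod (RtoC r * z) = Rabs r * Cmod z.
Proof. rewrite Cmod_mult, Cmod_R. reflexivity. Qed.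

Lemma nrm_lip z w : 0 < Cmod z -> 0 < Cmod w -> Cmod (nrm z - nrm w) <= 2 * Cmod (z - w) / Cmod w.
Proof.
  intros Hz Hw. unfold nrm.
  eapply Rle_trans; [apply Cmod_tri with (y := (RtoC (/ Cmod w) * z)%C)|].
  replace (RtoC (/ Cmod z) * z - RtoC (/ Cmod w) * z)%C with (RtoC (/ Cmod z - / Cmod w) * z)%C
    by (destruct z; apply Ceq; simpl; ring).
  replace (RtoC (/ Cmod w) * z - RtoC (/ Cmod w) * w)%C with (RtoC (/ Cmod w) * (z - w))%C
    by (destruct z, w; apply Ceq; simpl; ring).
  rewrite !Cmod_scal.
  replace (/ Cmod z - / Cmod w) with ((Cmod w - Cmod z) / (Cmod z * Cmod w)) by (field; lra).
  unfold Rdiv. rewrite Rabs_mult, (Rabs_right (/ (Cmod z * Cmod w))), (Rabs_right (/ Cmod w)).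
  2,3: apply Rle_ge, Rlt_le, Rinv_0_lt_compat; nra.
  assert (R1 := Cmod_rev w z). rewrite Cmod_sym in R1.
  replace (Rabs (Cmod w - Cmod z) * / (Cmod z * Cmod w) * Cmod z) with (Rabs (Cmod w - Cmod z) * / Cmod w) by (field; lra).
  assert (/ Cmod w > 0) by (apply Rinv_0_lt_compat; auto).
  nra.
Qed.

Lemma nrm_mult z w : 0 < Cmod z -> 0 < Cmod w -> nrm (z * w) = (nrm z * nrm w)%C.
Proof. intros. unfold nrm. rewrite Cmod_mult. destruct z, w; apply Ceq; simpl; field; split; lra. Qed.

Lemma nrm_pos_scal (l : R) z : 0 < l -> 0 < Cmod z -> nrm (RtoC l * z) = nrm z.
Proof. intros. unfold nrm. rewrite Cmod_scal, Rabs_right by lra. destruct z; apply Ceq; simpl; field; split; lra. Qed.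

Lemma nrm_neg_scal (l : R) z : l < 0 -> 0 < Cmod z -> nrm (RtoC l * z) = (- nrm z)%C.
Proof. intros. unfold nrm. rewrite Cmod_scal, Rabs_left by lra. destruct z; apply Ceq; simpl; field; split; lra. Qed.

Lemma ball_R (x e y : R) : ball x e y <-> Rabs (y - x) < e.
Proof. reflexivity. Qed.

Lemma cont2_box f x y : cont2 f (x, y) -> forall e, 0 < e -> exists d, 0 < d /\
  forall u v, Rabs (u - x) < d -> Rabs (v - y) < d -> Rabs (f u v - f x y) < e.
Proof.
  intros H e He. unfold cont2, continuous in H.
  apply (proj1 (filterlim_locally _ _)) with (eps := mkposreal e He) in H.
  destruct H as [d Hd]. exists d. split; [apply cond_pos|]. intros u v Hu Hv.
  apply (Hd (u, v)). split; simpl; apply ball_R; auto.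
Qed.


Lemma Cmod_fst (z : Complex.C) : Rabs (fst z) <= Cmod z.
Proof. eapply Rle_trans; [apply Rmax_l|apply Rmax_Cmod]. Qed.
Lemma Cmod_snd (z : Complex.C) : Rabs (snd z) <= Cmod z.
Proof. eapply Rle_trans; [apply Rmax_r|apply Rmax_Cmod]. Qed.
Lemma Cmod_sum (z : Complex.C) : Cmod z <= Rabs (fst z) + Rabs (snd z).
Proof.
  unfold Cmod. rewrite <- (sqrt_pow2 (Rabs (fst z) + Rabs (snd z))).
  2: pose proof (Rabs_pos (fst z)); pose proof (Rabs_pos (snd z)); lra.
  apply sqrt_le_1_alt. rewrite <- (pow2_abs (fst z)), <- (pow2_abs (snd z)).
  pose proof (Rabs_pos (fst z)); pose proof (Rabs_pos (snd z)). nra.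
Qed.

Lemma MV1 (f : R -> R) a b L w :
  (forall x, Rmin a b <= x <= Rmax a b -> ex_derive f x /\ Rabs (Derive f x - L) <= w) ->
  Rabs (f b - f a - L * (b - a)) <= w * Rabs (b - a).
Proof.
  intros H.
  destruct (MVT_gen (fun x => f x - L * x) a b (fun x => Derive f x - L)) as [c [Hc Hc']].
  - intros x Hx. destruct (H x ltac:(lra)) as [H1 _].
    assert (HL : is_derive (fun t => L * t) x L) by (auto_derive; [auto|ring]).
    exact (is_derive_minus f (fun x => L * x) x _ _ (Derive_correct f x H1) HL).
  - intros x Hx. destruct (H x Hx) as [H1 _]. apply continuity_pt_filterlim.
    apply (ex_derive_continuous (fun x => f x - L * x)).
    apply (ex_derive_minus f (fun x => L * x)); auto. auto_derive; auto.
  - replace (f b - f a - L * (b - a)) with ((f b - L * b) - (f a - L * a)) by ring.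
    rewrite Hc', Rabs_mult. apply Rmult_le_compat_r. apply Rabs_pos. apply H; auto.
Qed.

Definition Vf (u : R -> R -> R) (p : Complex.C) : Complex.C :=
  (dx u (fst p) (snd p) - snd p, dy u (fst p) (snd p) + fst p).

Definition DV (u : R -> R -> R) (q v : Complex.C) : Complex.C :=
  (dx (dx u) (fst q) (snd q) * fst v + (dy (dx u) (fst q) (snd q) - 1) * snd v,
   (dx (dy u) (fst q) (snd q) + 1) * fst v + dy (dy u) (fst q) (snd q) * snd v).

Lemma Nu_nrm u p : Nu u p = nrm (Vf u p).
Proof. unfold Nu, nrm, Vf, Cmod. apply Ceq; simpl; unfold Rdiv; ring. Qed.

Lemma in_box (q z : Complex.C) r : Rabs (fst z - fst q) < r -> Rabs (snd z - snd q) < r -> Cmod (z - q) < 2 * r.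
Proof. intros. eapply Rle_lt_trans; [apply Cmod_sum|]. simpl. unfold Rminus in *. lra. Qed.

Lemma TE Om u p0 eps q : C2_on Om u -> (forall p, Cmod (p - p0) < eps -> Om p) -> Cmod (q - p0) < eps ->
  forall w, 0 < w -> exists rho, 0 < rho /\ forall p q', Cmod (p - q) < rho -> Cmod (q' - q) < rho ->
  Cmod (Vf u p - Vf u q' - DV u q (p - q')) <= w * Cmod (p - q').
Proof.
  intros H2 HD Hq w Hw. destruct q as [q1 q2].
  destruct (H2 q1 q2 (HD _ Hq)) as [_ [_ [_ [_ [_ [_ [C1 [C2 [C3 C4]]]]]]]]].
  destruct (cont2_box _ _ _ C1 (w/4) ltac:(lra)) as [d1 [Hd1 E1]].
  destruct (cont2_box _ _ _ C2 (w/4) ltac:(lra)) as [d2 [Hd2 E2]].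
  destruct (cont2_box _ _ _ C3 (w/4) ltac:(lra)) as [d3 [Hd3 E3]].
  destruct (cont2_box _ _ _ C4 (w/4) ltac:(lra)) as [d4 [Hd4 E4]].
  set (m := eps - Cmod ((q1, q2) - p0)).
  exists (Rmin (m/4) (Rmin (Rmin d1 d2) (Rmin d3 d4))).
  assert (Hm : 0 < m) by (unfold m; lra).
  split. repeat apply Rmin_pos; lra.
  intros p q' Hp Hq'.
  set (r := Rmin (m/4) (Rmin (Rmin d1 d2) (Rmin d3 d4))) in *.
  assert (r1 : r <= m/4) by apply Rmin_l.
  assert (r2 : r <= d1).
  { unfold r. eapply Rle_trans; [apply Rmin_r|]. eapply Rle_trans; [apply Rmin_l|]. apply Rmin_l. }
  assert (r3 : r <= d2).
  { unfold r. eapply Rle_trans; [apply Rmin_r|]. eapply Rle_trans; [apply Rmin_l|]. apply Rmin_r. }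
  assert (r4 : r <= d3).
  { unfold r. eapply Rle_trans; [apply Rmin_r|]. eapply Rle_trans; [apply Rmin_r|]. apply Rmin_l. }
  assert (r5 : r <= d4).
  { unfold r. eapply Rle_trans; [apply Rmin_r|]. eapply Rle_trans; [apply Rmin_r|]. apply Rmin_r. }
  destruct p as [p1 p2], q' as [s1 s2].
  assert (P1 := Cmod_fst ((p1, p2) - (q1, q2))). assert (P2 := Cmod_snd ((p1, p2) - (q1, q2))).
  assert (Q1 := Cmod_fst ((s1, s2) - (q1, q2))). assert (Q2 := Cmod_snd ((s1, s2) - (q1, q2))).
  simpl in P1, P2, Q1, Q2. fold (p1 - q1) (p2 - q2) (s1 - q1) (s2 - q2) in *.
  assert (InD : forall x y, Rabs (x - q1) < r -> Rabs (y - q2) < r -> Om (x, y)).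
  { intros x y Hx Hy. apply HD. eapply Rle_lt_trans; [apply Cmod_tri with (y := (q1, q2))|].
    assert (Cmod ((x, y) - (q1, q2)) < 2 * r) by (apply in_box; simpl; auto). unfold m in r1. lra. }
  assert (between : forall x a b, Rmin a b <= x <= Rmax a b -> Rabs (a - q1) < r -> Rabs (b - q1) < r -> Rabs (x - q1) < r).
  { intros x a0 b0 Hx Ha Hb. apply Rabs_lt_between in Ha, Hb. apply Rabs_lt_between.
    unfold Rmin, Rmax in Hx. destruct (Rle_dec a0 b0); lra. }
  assert (between2 : forall x a b, Rmin a b <= x <= Rmax a b -> Rabs (a - q2) < r -> Rabs (b - q2) < r -> Rabs (x - q2) < r).
  { intros x a0 b0 Hx Ha Hb. apply Rabs_lt_between in Ha, Hb. apply Rabs_lt_between.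
    unfold Rmin, Rmax in Hx. destruct (Rle_dec a0 b0); lra. }
  assert (H1 : Rabs (dx u p1 p2 - dx u s1 p2 - dx (dx u) q1 q2 * (p1 - s1)) <= w/4 * Rabs (p1 - s1)).
  { apply (MV1 (fun t => dx u t p2)). intros x Hx.
    assert (hx : Rabs (x - q1) < r) by (apply (between x s1 p1); auto; lra).
    destruct (H2 x p2 (InD x p2 hx ltac:(lra))) as [_ [[D1 _] _]]. split; auto.
    left. apply (E1 x p2); lra. }
  assert (H2' : Rabs (dx u s1 p2 - dx u s1 s2 - dy (dx u) q1 q2 * (p2 - s2)) <= w/4 * Rabs (p2 - s2)).
  { apply (MV1 (fun t => dx u s1 t)). intros y Hy.
    assert (hy : Rabs (y - q2) < r) by (apply (between2 y s2 p2); auto; lra).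
    destruct (H2 s1 y (InD s1 y ltac:(lra) hy)) as [_ [[_ D1] _]]. split; auto.
    left. apply (E2 s1 y); lra. }
  assert (H3 : Rabs (dy u p1 p2 - dy u s1 p2 - dx (dy u) q1 q2 * (p1 - s1)) <= w/4 * Rabs (p1 - s1)).
  { apply (MV1 (fun t => dy u t p2)). intros x Hx.
    assert (hx : Rabs (x - q1) < r) by (apply (between x s1 p1); auto; lra).
    destruct (H2 x p2 (InD x p2 hx ltac:(lra))) as [_ [_ [[D1 _] _]]]. split; auto.
    left. apply (E3 x p2); lra. }
  assert (H4 : Rabs (dy u s1 p2 - dy u s1 s2 - dy (dy u) q1 q2 * (p2 - s2)) <= w/4 * Rabs (p2 - s2)).
  { apply (MV1 (fun t => dy u s1 t)). intros y Hy.
    assert (hy : Rabs (y - q2) < r) by (apply (between2 y s2 p2); auto; lra).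
    destruct (H2 s1 y (InD s1 y ltac:(lra) hy)) as [_ [_ [[_ D1] _]]]. split; auto.
    left. apply (E4 s1 y); lra. }
  assert (Z1 := Cmod_fst ((p1, p2) - (s1, s2))). assert (Z2 := Cmod_snd ((p1, p2) - (s1, s2))).
  simpl in Z1, Z2. fold (p1 - s1) (p2 - s2) in *.
  assert (e1 : Rabs (fst ((Vf u (p1, p2) - Vf u (s1, s2) - DV u (q1, q2) ((p1, p2) - (s1, s2)))%C))
     <= w/4 * Rabs (p1 - s1) + w/4 * Rabs (p2 - s2)).
  { unfold Vf, DV; simpl. match goal with |- Rabs ?X <= _ =>
      replace X with ((dx u p1 p2 - dx u s1 p2 - dx (dx u) q1 q2 * (p1 - s1)) + (dx u s1 p2 - dx u s1 s2 - dy (dx u) q1 q2 * (p2 - s2))) by ring end.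
    eapply Rle_trans; [apply Rabs_triang|]. lra. }
  assert (e2 : Rabs (snd ((Vf u (p1, p2) - Vf u (s1, s2) - DV u (q1, q2) ((p1, p2) - (s1, s2)))%C))
     <= w/4 * Rabs (p1 - s1) + w/4 * Rabs (p2 - s2)).
  { unfold Vf, DV; simpl. match goal with |- Rabs ?X <= _ =>
      replace X with ((dy u p1 p2 - dy u s1 p2 - dx (dy u) q1 q2 * (p1 - s1)) + (dy u s1 p2 - dy u s1 s2 - dy (dy u) q1 q2 * (p2 - s2))) by ring end.
    eapply Rle_trans; [apply Rabs_triang|]. lra. }
  assert (w/4 * Rabs (p1 - s1) <= w/4 * Cmod ((p1, p2) - (s1, s2))) by (apply Rmult_le_compat_l; lra).
  assert (w/4 * Rabs (p2 - s2) <= w/4 * Cmod ((p1, p2) - (s1, s2))) by (apply Rmult_le_compat_l; lra).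
  eapply Rle_trans; [apply Cmod_sum|]. lra.
Qed.


Definition setup Om u g1 g2 a b (p0 : Complex.C) eps :=
  C2_on Om u /\ regular_C1_curve g1 g2 a b /\ (forall p, Cmod (p - p0) < eps -> Om p) /\
  (forall t, a < t < b -> Vf u (g1 t, g2 t) = RtoC 0) /\ 0 < eps.

Lemma deriv_approx f x : ex_derive f x -> forall e, 0 < e -> exists d, 0 < d /\
  forall h, h <> 0 -> Rabs h < d -> Rabs (f (x + h) - f x - h * Derive f x) <= e * Rabs h.
Proof.
  intros H e He. apply Derive_correct, is_derive_Reals in H.
  destruct (H e He) as [d Hd]. exists d. split; [apply cond_pos|]. intros h Hh Hh'.
  specialize (Hd h Hh Hh').
  replace (f (x + h) - f x - h * Derive f x) with (h * ((f (x + h) - f x) / h - Derive f x)) by (field; auto).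
  rewrite Rabs_mult. rewrite Rmult_comm. apply Rmult_le_compat_r. apply Rabs_pos. lra.
Qed.

Lemma DV_bound u q v : Cmod (DV u q v) <=
  (Rabs (dx (dx u) (fst q) (snd q)) + Rabs (dy (dx u) (fst q) (snd q) - 1) +
   Rabs (dx (dy u) (fst q) (snd q) + 1) + Rabs (dy (dy u) (fst q) (snd q))) * Cmod v.
Proof.
  eapply Rle_trans; [apply Cmod_sum|]. unfold DV; simpl.
  pose proof (Cmod_fst v). pose proof (Cmod_snd v).
  set (A := dx (dx u) (fst q) (snd q)). set (B := dy (dx u) (fst q) (snd q) - 1).
  set (C := dx (dy u) (fst q) (snd q) + 1). set (D := dy (dy u) (fst q) (snd q)).
  assert (Rabs (A * fst v + B * snd v) <= Rabs A * Cmod v + Rabs B * Cmod v).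
  { eapply Rle_trans; [apply Rabs_triang|]. rewrite !Rabs_mult.
    apply Rplus_le_compat; apply Rmult_le_compat_l; auto; apply Rabs_pos. }
  assert (Rabs (C * fst v + D * snd v) <= Rabs C * Cmod v + Rabs D * Cmod v).
  { eapply Rle_trans; [apply Rabs_triang|]. rewrite !Rabs_mult.
    apply Rplus_le_compat; apply Rmult_le_compat_l; auto; apply Rabs_pos. }
  lra.
Qed.

Lemma DV_lin u q (v1 v2 : Complex.C) (r1 r2 : R) :
  DV u q (RtoC r1 * v1 + RtoC r2 * v2) = (RtoC r1 * DV u q v1 + RtoC r2 * DV u q v2)%C.
Proof. unfold DV. destruct v1, v2; apply Ceq; simpl; ring. Qed.

Definition tau (g1 g2 : R -> R) tq : Complex.C := (Derive g1 tq, Derive g2 tq).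
Definition nor (g1 g2 : R -> R) tq : Complex.C := (- Derive g2 tq, Derive g1 tq).

Lemma Cmod0 : Cmod (RtoC 0) = 0.
Proof. rewrite Cmod_R, Rabs_R0; auto. Qed.

Lemma DVtau Om u g1 g2 a b p0 eps tq : setup Om u g1 g2 a b p0 eps -> a < tq < b ->
  Cmod ((g1 tq, g2 tq) - p0) < eps -> DV u (g1 tq, g2 tq) (tau g1 g2 tq) = RtoC 0.
Proof.
  intros [H2 [[Hab [Hreg _]] [HD [HV He]]]] Htq Hq.
  destruct (Hreg tq Htq) as [Dg1 [Dg2 _]].
  set (q := (g1 tq, g2 tq)). set (z := DV u q (tau g1 g2 tq)).
  set (M := Rabs (dx (dx u) (fst q) (snd q)) + Rabs (dy (dx u) (fst q) (snd q) - 1) +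
   Rabs (dx (dy u) (fst q) (snd q) + 1) + Rabs (dy (dy u) (fst q) (snd q))).
  assert (HM : 0 <= M) by (unfold M; pose proof (Rabs_pos (dx (dx u) (fst q) (snd q))); pose proof (Rabs_pos (dy (dx u) (fst q) (snd q) - 1));
     pose proof (Rabs_pos (dx (dy u) (fst q) (snd q) + 1)); pose proof (Rabs_pos (dy (dy u) (fst q) (snd q))); lra).
  set (S := Rabs (Derive g1 tq) + Rabs (Derive g2 tq)).
  assert (HS : 0 <= S) by (unfold S; pose proof (Rabs_pos (Derive g1 tq)); pose proof (Rabs_pos (Derive g2 tq)); lra).
  set (K := S + 2 + 2 * M).
  assert (key : forall w, 0 < w <= 1 -> Cmod z <= w * K).
  { intros w Hw.
    destruct (TE Om u p0 eps q H2 HD Hq w ltac:(lra)) as [rho [Hrho TEq]].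
    destruct (deriv_approx g1 tq Dg1 w ltac:(lra)) as [d1 [Hd1 A1]].
    destruct (deriv_approx g2 tq Dg2 w ltac:(lra)) as [d2 [Hd2 A2]].
    set (h := Rmin (Rmin (d1/2) (d2/2)) (Rmin ((b - tq)/2) (rho / (2 * (S + 2))))).
    assert (Hh0 : 0 < h) by (unfold h; repeat apply Rmin_pos; try lra; apply Rdiv_lt_0_compat; lra).
    assert (Hh1 : h < d1) by (unfold h; eapply Rle_lt_trans; [apply Rmin_l|]; eapply Rle_lt_trans; [apply Rmin_l|]; lra).
    assert (Hh2 : h < d2) by (unfold h; eapply Rle_lt_trans; [apply Rmin_l|]; eapply Rle_lt_trans; [apply Rmin_r|]; lra).
    assert (Hh3 : h < b - tq) by (unfold h; eapply Rle_lt_trans; [apply Rmin_r|]; eapply Rle_lt_trans; [apply Rmin_l|]; lra).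
    assert (Hh4 : h <= rho / (2 * (S + 2))) by (unfold h; eapply Rle_trans; [apply Rmin_r|]; apply Rmin_r).
    assert (Hhh : Rabs h = h) by (apply Rabs_right; lra).
    specialize (A1 h ltac:(lra) ltac:(lra)). specialize (A2 h ltac:(lra) ltac:(lra)). rewrite Hhh in A1, A2.
    set (gt := (g1 (tq + h), g2 (tq + h))).
    assert (Hgt : Vf u gt = RtoC 0) by (apply HV; lra).
    set (err := (gt - q - RtoC h * tau g1 g2 tq)%C).
    assert (Herr : Cmod err <= 2 * w * h).
    { eapply Rle_trans; [apply Cmod_sum|]. unfold err, gt, q, tau; simpl.
      replace (g1 (tq + h) + - g1 tq + - (h * Derive g1 tq - 0 * Derive g2 tq)) with (g1 (tq + h) - g1 tq - h * Derive g1 tq) by ring.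
      replace (g2 (tq + h) + - g2 tq + - (h * Derive g2 tq + 0 * Derive g1 tq)) with (g2 (tq + h) - g2 tq - h * Derive g2 tq) by ring.
      lra. }
    assert (Hgq : Cmod (gt - q) <= h * (S + 2 * w)).
    { replace (gt - q)%C with (RtoC h * tau g1 g2 tq + err)%C by (unfold err; destruct gt, q; apply Ceq; simpl; ring).
      eapply Rle_trans; [apply Cmod_triangle|]. rewrite Cmod_scal, Hhh.
      assert (Cmod (tau g1 g2 tq) <= S) by (unfold S, tau; apply Cmod_sum).
      assert (h * Cmod (tau g1 g2 tq) <= h * S) by (apply Rmult_le_compat_l; lra). nra. }
    assert (Hgq' : Cmod (gt - q) < rho).
    { eapply Rle_lt_trans; [exact Hgq|].
      assert (h * (S + 2 * w) <= h * (S + 2)) by (apply Rmult_le_compat_l; lra).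
      assert (h * (S + 2) <= rho / (2 * (S + 2)) * (S + 2)) by (apply Rmult_le_compat_r; lra).
      replace (rho / (2 * (S + 2)) * (S + 2)) with (rho / 2) in H0 by (field; lra). lra. }
    assert (Hqq : Cmod (q - q) < rho) by (replace (q - q)%C with (RtoC 0) by (destruct q; apply Ceq; simpl; ring); rewrite Cmod0; lra).
    specialize (TEq gt q Hgq' Hqq).
    assert (Hq0 : Vf u q = RtoC 0) by (apply HV; auto).
    rewrite Hgt, Hq0 in TEq.
    replace (RtoC 0 - RtoC 0 - DV u q (gt - q))%C with (- DV u q (gt - q))%C in TEq by (destruct (DV u q (gt - q)); apply Ceq; simpl; ring).
    rewrite Cmod_opp in TEq.
    assert (E : DV u q (gt - q) = (RtoC h * z + DV u q err)%C).
    { unfold z. rewrite <- (Cmult_1_l (DV u q err)). replace (RtoC 1) with (RtoC 1) by reflexivity.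
      rewrite <- DV_lin. f_equal. unfold err. destruct gt, q, (tau g1 g2 tq); apply Ceq; simpl; ring. }
    assert (Hz : h * Cmod z <= w * Cmod (gt - q) + M * Cmod err).
    { replace (RtoC h * z)%C with (DV u q (gt - q) - DV u q err)%C by (rewrite E; destruct z, (DV u q err); apply Ceq; simpl; ring).
      rewrite <- Hhh, <- Cmod_scal.
      replace (RtoC (Rabs h) * z)%C with (RtoC h * z)%C by (rewrite Hhh; reflexivity).
      replace (RtoC h * z)%C with (DV u q (gt - q) - DV u q err)%C by (rewrite E; destruct z, (DV u q err); apply Ceq; simpl; ring).
      eapply Rle_trans; [apply Cmod_tri with (y := RtoC 0)|].
      replace (DV u q (gt - q) - RtoC 0)%C with (DV u q (gt - q)) by (destruct (DV u q (gt - q)); apply Ceq; simpl; ring).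
      replace (RtoC 0 - DV u q err)%C with (- DV u q err)%C by (destruct (DV u q err); apply Ceq; simpl; ring).
      rewrite Cmod_opp. pose proof (DV_bound u q err). fold M in H. lra. }
    assert (w * Cmod (gt - q) <= w * (h * (S + 2 * w))) by (apply Rmult_le_compat_l; lra).
    assert (M * Cmod err <= M * (2 * w * h)) by (apply Rmult_le_compat_l; lra).
    assert (h * Cmod z <= h * (w * K)).
    { unfold K. assert (w * (h * (S + 2 * w)) <= w * (h * (S + 2))) by (apply Rmult_le_compat_l; [lra|]; apply Rmult_le_compat_l; lra). nra. }
    apply Rmult_le_reg_l with h; lra. }
  apply Cmod_eq_0. destruct (Cmod_ge_0 z) as [Hz|Hz]; [|auto].
  exfalso. assert (HK : 0 < K) by (unfold K; lra).
  set (w := Rmin 1 (Cmod z / (2 * K))).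
  assert (Hw : 0 < w <= 1) by (unfold w; split; [apply Rmin_pos; [lra|apply Rdiv_lt_0_compat; lra]|apply Rmin_l]).
  specialize (key w Hw).
  assert (w * K <= Cmod z / (2 * K) * K) by (apply Rmult_le_compat_r; [lra|apply Rmin_r]).
  replace (Cmod z / (2 * K) * K) with (Cmod z / 2) in H by (field; lra). lra.
Qed.


Lemma schwarz_at Om u p0 eps q : C2_on Om u -> (forall p, Cmod (p - p0) < eps -> Om p) -> Cmod (q - p0) < eps ->
  dx (dy u) (fst q) (snd q) = dy (dx u) (fst q) (snd q).
Proof.
  intros H2 HD Hq. destruct q as [q1 q2]. simpl.
  set (r := (eps - Cmod ((q1, q2) - p0)) / 2).
  assert (Hr : 0 < r) by (unfold r; lra).
  assert (InD : forall x y, Rabs (x - q1) < r -> Rabs (y - q2) < r -> Om (x, y)).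
  { intros x y Hx Hy. apply HD. eapply Rle_lt_trans; [apply Cmod_tri with (y := (q1, q2))|].
    assert (Cmod ((x, y) - (q1, q2)) < 2 * r) by (apply in_box; simpl; auto). unfold r in H. lra. }
  destruct (H2 q1 q2 (HD _ Hq)) as [_ [_ [_ [_ [_ [_ [C1 [C2 [C3 C4]]]]]]]]].
  apply (Schwarz u q1 q2).
  - exists (mkposreal r Hr). intros x y Hx Hy. simpl in Hx, Hy.
    destruct (H2 x y (InD x y Hx Hy)) as [[P1 P2] [[P3 P4] [[P5 P6] _]]]. repeat split; auto.
  - intro e. destruct (cont2_box _ _ _ C3 e (cond_pos e)) as [d [Hd E]].
    exists (mkposreal d Hd). intros x y Hx Hy. apply E; auto.
  - intro e. destruct (cont2_box _ _ _ C2 e (cond_pos e)) as [d [Hd E]].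
    exists (mkposreal d Hd). intros x y Hx Hy. apply E; auto.
Qed.

Lemma wnz Om u g1 g2 a b p0 eps tq : setup Om u g1 g2 a b p0 eps -> a < tq < b ->
  Cmod ((g1 tq, g2 tq) - p0) < eps -> 0 < Cmod (DV u (g1 tq, g2 tq) (nor g1 g2 tq)).
Proof.
  intros HS Htq Hq. pose proof (DVtau _ _ _ _ _ _ _ _ tq HS Htq Hq) as Ht.
  destruct HS as [H2 [[Hab [Hreg _]] [HD [HV He]]]].
  destruct (Hreg tq Htq) as [_ [_ [_ [_ Hne]]]].
  pose proof (schwarz_at Om u p0 eps _ H2 HD Hq) as Sch. simpl in Sch.
  destruct (Cmod_ge_0 (DV u (g1 tq, g2 tq) (nor g1 g2 tq))) as [h|h]; auto.
  exfalso. symmetry in h. apply Cmod_eq_0 in h.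
  unfold DV, tau, nor in *; simpl in *. injection Ht; injection h; clear Ht h; intros e4 e2 e3 e1.
  rewrite Sch in *.
  set (A := dx (dx u) (g1 tq) (g2 tq)) in *. set (D := dy (dy u) (g1 tq) (g2 tq)) in *.
  set (m := dy (dx u) (g1 tq) (g2 tq)) in *.
  set (t1 := Derive g1 tq) in *. set (t2 := Derive g2 tq) in *.
  assert (F1 : (m - 1) * (t1 * t1 + t2 * t2) = 0).
  { replace ((m - 1) * (t1 * t1 + t2 * t2)) with (t2 * (A * t1 + (m - 1) * t2) + t1 * (A * - t2 + (m - 1) * t1)) by ring.
    rewrite e1, e2. ring. }
  assert (F2 : (m + 1) * (t1 * t1 + t2 * t2) = 0).
  { replace ((m + 1) * (t1 * t1 + t2 * t2)) with (t1 * ((m + 1) * t1 + D * t2) - t2 * ((m + 1) * - t2 + D * t1)) by ring.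
    rewrite e3, e4. ring. }
  assert (T0 : t1 * t1 + t2 * t2 = 0) by nra.
  apply Hne. f_equal; nra.
Qed.


Lemma dot_bound x1 x2 y1 y2 B : Rabs y1 <= B -> Rabs y2 <= B -> Rabs (x1 * y1 + x2 * y2) <= (Rabs x1 + Rabs x2) * B.
Proof.
  intros H1 H2. eapply Rle_trans; [apply Rabs_triang|]. rewrite !Rabs_mult.
  pose proof (Rabs_pos x1). pose proof (Rabs_pos x2).
  assert (Rabs x1 * Rabs y1 <= Rabs x1 * B) by (apply Rmult_le_compat_l; auto).
  assert (Rabs x2 * Rabs y2 <= Rabs x2 * B) by (apply Rmult_le_compat_l; auto). lra.
Qed.

Lemma tau_ne g1 g2 a b tq : regular_C1_curve g1 g2 a b -> a < tq < b ->
  0 < Rabs (Derive g1 tq) + Rabs (Derive g2 tq) /\ 0 < Derive g1 tq ^ 2 + Derive g2 tq ^ 2.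
Proof.
  intros [_ [Hreg _]] Htq. destruct (Hreg tq Htq) as [_ [_ [_ [_ Hne]]]].
  destruct (Req_dec (Derive g1 tq) 0) as [h1|h1]; destruct (Req_dec (Derive g2 tq) 0) as [h2|h2].
  - exfalso; apply Hne; rewrite h1, h2; auto.
  - pose proof (Rabs_pos (Derive g1 tq)). pose proof (Rabs_pos_lt _ h2). split; [lra|]. nra.
  - pose proof (Rabs_pos (Derive g2 tq)). pose proof (Rabs_pos_lt _ h1). split; [lra|]. nra.
  - pose proof (Rabs_pos_lt _ h2). pose proof (Rabs_pos_lt _ h1). split; [lra|]. nra.
Qed.

Lemma FOOT Om u g1 g2 a b p0 eps tq : setup Om u g1 g2 a b p0 eps -> a < tq < b ->
  forall rho, 0 < rho -> exists d, 0 < d /\ forall p, Cmod (p - (g1 tq, g2 tq)) < d ->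
  exists t, a < t < b /\ Cmod ((g1 t, g2 t) - (g1 tq, g2 tq)) < rho /\
    Derive g1 tq * (fst p - g1 t) + Derive g2 tq * (snd p - g2 t) = 0.
Proof.
  intros HS Htq rho Hrho. destruct HS as [H2 [Hc [HD [HV He]]]].
  destruct (tau_ne g1 g2 a b tq Hc Htq) as [HSp HTp].
  destruct Hc as [Hab [Hreg _]]. pose proof (Hreg tq Htq) as [Dg1 [Dg2 _]].
  set (t1 := Derive g1 tq) in *. set (t2 := Derive g2 tq) in *.
  set (S := Rabs t1 + Rabs t2) in *. set (T := t1 ^ 2 + t2 ^ 2) in *.
  set (e0 := T / (2 * S)).
  assert (He0 : 0 < e0) by (unfold e0; apply Rdiv_lt_0_compat; lra).
  destruct (deriv_approx g1 tq Dg1 e0 He0) as [d1 [Hd1 A1]].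
  destruct (deriv_approx g2 tq Dg2 e0 He0) as [d2 [Hd2 A2]].
  fold t1 in A1. fold t2 in A2.
  set (h0 := Rmin (Rmin (d1/2) (d2/2)) (Rmin (Rmin ((tq - a)/2) ((b - tq)/2)) (rho / (2 * (S + 2 * e0))))).
  assert (Hh0 : 0 < h0) by (unfold h0; repeat apply Rmin_pos; try lra; apply Rdiv_lt_0_compat; lra).
  assert (Hh1 : h0 < d1) by (unfold h0; eapply Rle_lt_trans; [apply Rmin_l|]; eapply Rle_lt_trans; [apply Rmin_l|]; lra).
  assert (Hh2 : h0 < d2) by (unfold h0; eapply Rle_lt_trans; [apply Rmin_l|]; eapply Rle_lt_trans; [apply Rmin_r|]; lra).
  assert (Hh3 : h0 < tq - a) by (unfold h0; eapply Rle_lt_trans; [apply Rmin_r|]; eapply Rle_lt_trans; [apply Rmin_l|];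
     eapply Rle_lt_trans; [apply Rmin_l|]; lra).
  assert (Hh4 : h0 < b - tq) by (unfold h0; eapply Rle_lt_trans; [apply Rmin_r|]; eapply Rle_lt_trans; [apply Rmin_l|];
     eapply Rle_lt_trans; [apply Rmin_r|]; lra).
  assert (Hh5 : h0 <= rho / (2 * (S + 2 * e0))) by (unfold h0; eapply Rle_trans; [apply Rmin_r|]; apply Rmin_r).
  assert (Disp : forall h, Rabs h <= h0 -> Cmod ((g1 (tq + h), g2 (tq + h)) - (g1 tq, g2 tq)) < rho).
  { intros h Hh. destruct (Req_dec h 0) as [->|hn].
    - rewrite Rplus_0_r. replace ((g1 tq, g2 tq) - (g1 tq, g2 tq))%C with (RtoC 0) by (apply Ceq; simpl; ring). rewrite Cmod0; lra.
    - specialize (A1 h hn ltac:(lra)). specialize (A2 h hn ltac:(lra)).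
      eapply Rle_lt_trans; [apply Cmod_sum|]. simpl.
      assert (Rabs (g1 (tq + h) + - g1 tq) <= Rabs h * (Rabs t1 + e0)).
      { replace (g1 (tq + h) + - g1 tq) with ((g1 (tq + h) - g1 tq - h * t1) + h * t1) by ring.
        eapply Rle_trans; [apply Rabs_triang|]. rewrite Rabs_mult. nra. }
      assert (Rabs (g2 (tq + h) + - g2 tq) <= Rabs h * (Rabs t2 + e0)).
      { replace (g2 (tq + h) + - g2 tq) with ((g2 (tq + h) - g2 tq - h * t2) + h * t2) by ring.
        eapply Rle_trans; [apply Rabs_triang|]. rewrite Rabs_mult. nra. }
      assert (Rabs h * (S + 2 * e0) <= h0 * (S + 2 * e0)) by (apply Rmult_le_compat_r; lra).
      assert (h0 * (S + 2 * e0) <= rho / (2 * (S + 2 * e0)) * (S + 2 * e0)) by (apply Rmult_le_compat_r; lra).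
      replace (rho / (2 * (S + 2 * e0)) * (S + 2 * e0)) with (rho / 2) in H3 by (field; lra).
      unfold S in *. lra. }
  exists (T * h0 / (2 * S)). split. apply Rdiv_lt_0_compat; nra.
  intros p Hp.
  set (f := fun t => t1 * (g1 t - fst p) + t2 * (g2 t - snd p)).
  assert (Tq : Rabs (t1 * (g1 tq - fst p) + t2 * (g2 tq - snd p)) <= S * Cmod (p - (g1 tq, g2 tq))).
  { unfold S. apply dot_bound.
    - replace (g1 tq - fst p) with (- (fst (p - (g1 tq, g2 tq))%C)) by (simpl; ring). rewrite Rabs_Ropp. apply Cmod_fst.
    - replace (g2 tq - snd p) with (- (snd (p - (g1 tq, g2 tq))%C)) by (simpl; ring). rewrite Rabs_Ropp. apply Cmod_snd. }
  assert (Sd : S * Cmod (p - (g1 tq, g2 tq)) < T * h0 / 2).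
  { apply Rmult_lt_compat_l with (r := S) in Hp; auto. replace (S * (T * h0 / (2 * S))) with (T * h0 / 2) in Hp by (field; lra). lra. }
  assert (Ends : forall h, h <> 0 -> Rabs h <= h0 ->
     Rabs (f (tq + h) - f tq - h * T) <= S * (e0 * Rabs h)).
  { intros h hn Hh. specialize (A1 h hn ltac:(lra)). specialize (A2 h hn ltac:(lra)).
    unfold f, T. replace (t1 * (g1 (tq + h) - fst p) + t2 * (g2 (tq + h) - snd p) - (t1 * (g1 tq - fst p) + t2 * (g2 tq - snd p)) - h * (t1 ^ 2 + t2 ^ 2))
      with (t1 * (g1 (tq + h) - g1 tq - h * t1) + t2 * (g2 (tq + h) - g2 tq - h * t2)) by ring.
    apply dot_bound; auto. }
  assert (SE : S * (e0 * h0) = T * h0 / 2) by (unfold e0; field; lra).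
  assert (Fp : 0 < f (tq + h0)).
  { assert (Ha : Rabs h0 <= h0) by (rewrite Rabs_right; lra).
    assert (E := Ends h0 ltac:(lra) Ha). rewrite (Rabs_right h0) in E by lra.
    apply Rabs_le_between' in E. fold f in Tq. unfold f at 2 in E. apply Rabs_le_between in Tq.
    assert (h0 * T > 0) by nra. unfold f in *. lra. }
  assert (Fm : f (tq - h0) < 0).
  { assert (Ha : Rabs (- h0) <= h0) by (rewrite Rabs_Ropp, Rabs_right; lra).
    assert (E := Ends (- h0) ltac:(lra) Ha). rewrite Rabs_Ropp, (Rabs_right h0) in E by lra.
    apply Rabs_le_between' in E. apply Rabs_le_between in Tq.
    assert (h0 * T > 0) by nra. unfold f, Rminus in *. lra. }
  destruct (Ranalysis5.IVT_interv f (tq - h0) (tq + h0)) as [t [Ht Hft]].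
  - intros t Ht. apply continuity_pt_filterlim. apply (ex_derive_continuous f).
    destruct (Hreg t ltac:(lra)) as [E1 [E2 _]]. unfold f. auto_derive. repeat split; auto.
  - lra.
  - auto.
  - auto.
  - exists t. split; [lra|]. split.
    + replace t with (tq + (t - tq)) by ring. apply Disp. apply Rabs_le; lra.
    + unfold f in Hft. replace (t1 * (fst p - g1 t) + t2 * (snd p - g2 t)) with (- (t1 * (g1 t - fst p) + t2 * (g2 t - snd p))) by ring.
      rewrite Hft; ring.
Qed.


Lemma DV_decomp u q (t v : Complex.C) :
  (RtoC (fst t ^ 2 + snd t ^ 2) * DV u q v =
   RtoC (fst t * fst v + snd t * snd v) * DV u q t + RtoC (- snd t * fst v + fst t * snd v) * DV u q (Ropp (snd t), fst t))%C.
Proof. unfold DV. destruct t, v; apply Ceq; simpl; ring. Qed.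

Lemma Cmod_tau g1 g2 tq : Cmod (tau g1 g2 tq) = sqrt (Derive g1 tq ^ 2 + Derive g2 tq ^ 2).
Proof. reflexivity. Qed.
Lemma Cmod_nor g1 g2 tq : Cmod (nor g1 g2 tq) = sqrt (Derive g1 tq ^ 2 + Derive g2 tq ^ 2).
Proof. unfold Cmod, nor; simpl. f_equal. ring. Qed.

Lemma Vf_trace Om u g1 g2 a b p0 eps t : setup Om u g1 g2 a b p0 eps -> a < t < b -> Vf u (g1 t, g2 t) = RtoC 0.
Proof. intros [_ [_ [_ [HV _]]]] Ht. apply HV; auto. Qed.

Lemma DV_orth Om u g1 g2 a b p0 eps tq v : setup Om u g1 g2 a b p0 eps -> a < tq < b ->
  Cmod ((g1 tq, g2 tq) - p0) < eps ->
  Derive g1 tq * fst v + Derive g2 tq * snd v = 0 ->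
  let T := Derive g1 tq ^ 2 + Derive g2 tq ^ 2 in
  let lam := (- Derive g2 tq * fst v + Derive g1 tq * snd v) / T in
  DV u (g1 tq, g2 tq) v = (RtoC lam * DV u (g1 tq, g2 tq) (nor g1 g2 tq))%C /\
  Cmod v = Rabs lam * sqrt T.
Proof.
  intros HS Htq Hq Hdot T lam.
  pose proof (DVtau _ _ _ _ _ _ _ _ tq HS Htq Hq) as Ht.
  destruct HS as [H2 [Hc _]]. destruct (tau_ne g1 g2 a b tq Hc Htq) as [_ HT]. fold T in HT.
  pose proof (DV_decomp u (g1 tq, g2 tq) (tau g1 g2 tq) v) as E. simpl in E.
  change (Derive g1 tq, Derive g2 tq) with (tau g1 g2 tq) in E.
  change (Ropp (Derive g2 tq), Derive g1 tq) with (nor g1 g2 tq) in E.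
  rewrite Ht, Hdot in E. fold T in E.
  split.
  - destruct (DV u (g1 tq, g2 tq) v) as [x1 x2] eqn:Ex. destruct (DV u (g1 tq, g2 tq) (nor g1 g2 tq)) as [w1 w2].
    injection E; intros E2 E1. apply Ceq; simpl; unfold lam; simpl in *.
    + apply (Rmult_eq_reg_l T); [|lra]. field_simplify; [|lra]. unfold T; nra.
    + apply (Rmult_eq_reg_l T); [|lra]. field_simplify; [|lra]. unfold T; nra.
  - unfold Cmod. replace (fst v ^ 2 + snd v ^ 2) with (lam ^ 2 * T).
    + rewrite sqrt_mult_alt. rewrite <- (sqrt_pow2 (Rabs lam)) by apply Rabs_pos. rewrite pow2_abs. reflexivity.
      apply pow2_ge_0.
    + unfold lam. apply (Rmult_eq_reg_l T); [|lra].
      replace (T * (fst v ^ 2 + snd v ^ 2)) with ((Derive g1 tq * fst v + Derive g2 tq * snd v) ^ 2 + (- Derive g2 tq * fst v + Derive g1 tq * snd v) ^ 2) by (unfold T; ring).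
      rewrite Hdot. field. lra.
Qed.


Lemma T4 Om u g1 g2 a b p0 eps tq : setup Om u g1 g2 a b p0 eps -> a < tq < b ->
  Cmod ((g1 tq, g2 tq) - p0) < eps ->
  let w := DV u (g1 tq, g2 tq) (nor g1 g2 tq) in
  forall e, 0 < e -> exists d, 0 < d /\ forall p, Cmod (p - (g1 tq, g2 tq)) < d -> 0 < Cmod (Vf u p) ->
  Cmod (nrm (Vf u p * Vf u p) - nrm (w * w)) < e.
Proof.
  intros HS Htq Hq w e He.
  pose proof (wnz _ _ _ _ _ _ _ _ tq HS Htq Hq) as HW. fold w in HW.
  pose proof HS as [H2 [Hc [HD [HV Heps]]]].
  destruct (tau_ne g1 g2 a b tq Hc Htq) as [_ HT].
  set (T := Derive g1 tq ^ 2 + Derive g2 tq ^ 2) in *.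
  set (W := Cmod w) in *.
  set (tn := sqrt T). assert (Htn : 0 < tn) by (apply sqrt_lt_R0; auto).
  set (om := Rmin (W / (2 * tn)) (e * W / (12 * tn))).
  assert (Hom : 0 < om) by (apply Rmin_pos; apply Rdiv_lt_0_compat; nra).
  assert (om1 : om * tn <= W / 2).
  { assert (om * tn <= W / (2 * tn) * tn) by (apply Rmult_le_compat_r; [lra|apply Rmin_l]).
    replace (W / (2 * tn) * tn) with (W / 2) in H by (field; lra). auto. }
  assert (om2 : om * tn <= e * W / 12).
  { assert (om * tn <= e * W / (12 * tn) * tn) by (apply Rmult_le_compat_r; [lra|apply Rmin_r]).
    replace (e * W / (12 * tn) * tn) with (e * W / 12) in H by (field; lra). auto. }
  destruct (TE Om u p0 eps (g1 tq, g2 tq) H2 HD Hq om Hom) as [rho [Hrho TEq]].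
  destruct (FOOT _ _ _ _ _ _ _ _ tq HS Htq rho Hrho) as [d1 [Hd1 Ft]].
  exists (Rmin d1 rho). split. apply Rmin_pos; auto.
  intros p Hp HVp.
  assert (Hp1 : Cmod (p - (g1 tq, g2 tq)) < d1) by (eapply Rlt_le_trans; [exact Hp|apply Rmin_l]).
  assert (Hp2 : Cmod (p - (g1 tq, g2 tq)) < rho) by (eapply Rlt_le_trans; [exact Hp|apply Rmin_r]).
  destruct (Ft p Hp1) as [t [Ht [Hq' Hdot]]].
  set (q' := (g1 t, g2 t)) in *.
  assert (Vq' : Vf u q' = RtoC 0) by (apply HV; auto).
  specialize (TEq p q' Hp2 Hq'). rewrite Vq' in TEq.
  set (v := (p - q')%C) in *.
  assert (Hdot' : Derive g1 tq * fst v + Derive g2 tq * snd v = 0) by (unfold v, q'; simpl; unfold Rminus in Hdot; lra).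
  destruct (DV_orth _ _ _ _ _ _ _ _ tq v HS Htq Hq Hdot') as [DVv Cv].
  fold T in DVv, Cv. fold w in DVv. fold tn in Cv.
  set (lam := (- Derive g2 tq * fst v + Derive g1 tq * snd v) / T) in *.
  rewrite DVv in TEq. rewrite Cv in TEq.
  set (ee := (Vf u p - RtoC 0 - RtoC lam * w)%C) in *.
  assert (Eee : Vf u p = (ee + RtoC lam * w)%C) by (unfold ee; destruct (Vf u p), w; apply Ceq; simpl; ring).
  assert (Hl : lam <> 0).
  { intro h. rewrite h, Rabs_R0 in TEq. assert (Cmod ee <= 0) by nra.
    assert (ee = RtoC 0) by (apply Cmod_eq_0; pose proof (Cmod_ge_0 ee); lra).
    rewrite Eee, H0, h in HVp. replace (RtoC 0 + RtoC 0 * w)%C with (RtoC 0) in HVp by (destruct w; apply Ceq; simpl; ring).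
    rewrite Cmod0 in HVp. lra. }
  set (L := Rabs lam) in *. assert (HL : 0 < L) by (apply Rabs_pos_lt; auto). fold L in TEq.
  assert (Bee : Cmod ee <= L * W / 2).
  { assert (om * (L * tn) = L * (om * tn)) by ring.
    assert (L * (om * tn) <= L * (W / 2)) by (apply Rmult_le_compat_l; lra). fold L in TEq. lra. }
  assert (Clw : Cmod (RtoC lam * w) = L * W) by (rewrite Cmod_scal; reflexivity).
  assert (Bsum : Cmod (Vf u p + RtoC lam * w) <= 5/2 * (L * W)).
  { rewrite Eee. replace (ee + RtoC lam * w + RtoC lam * w)%C with (ee + (RtoC lam * w + RtoC lam * w))%C
      by (destruct ee, w; apply Ceq; simpl; ring).
    eapply Rle_trans; [apply Cmod_triangle|]. rewrite Cmod_2x, Clw. lra. }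
  assert (Bdiff : Cmod (Vf u p * Vf u p - (RtoC lam * w) * (RtoC lam * w)) <= om * (L * tn) * (5/2 * (L * W))).
  { rewrite Cdiff_sq, Cmod_mult.
    replace (Vf u p - RtoC lam * w)%C with ee by (rewrite Eee; destruct ee, w; apply Ceq; simpl; ring).
    apply Rmult_le_compat; auto; apply Cmod_ge_0. }
  assert (Cw2 : Cmod ((RtoC lam * w) * (RtoC lam * w)) = L * W * (L * W)) by (rewrite Cmod_mult, Clw; ring).
  assert (Nw : nrm ((RtoC lam * w) * (RtoC lam * w)) = nrm (w * w)).
  { replace ((RtoC lam * w) * (RtoC lam * w))%C with (RtoC (lam ^ 2) * (w * w))%C by (destruct w; apply Ceq; simpl; ring).
    apply nrm_pos_scal. apply pow2_gt_0; auto. rewrite Cmod_mult. fold W. nra. }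
  rewrite <- Nw.
  eapply Rle_lt_trans; [apply nrm_lip|].
  - rewrite Cmod_mult. nra.
  - rewrite Cw2. assert (0 < L * W) by (apply Rmult_lt_0_compat; auto). apply Rmult_lt_0_compat; auto.
  - rewrite Cw2. unfold Rdiv.
    assert (0 < L * W) by (apply Rmult_lt_0_compat; auto).
    assert (Hi : 0 < / (L * W * (L * W))) by (apply Rinv_0_lt_compat, Rmult_lt_0_compat; auto).
    assert (X1 : 2 * Cmod (Vf u p * Vf u p - RtoC lam * w * (RtoC lam * w)) * / (L * W * (L * W)) <=
            2 * (om * (L * tn) * (5 / 2 * (L * W))) * / (L * W * (L * W))) by (apply Rmult_le_compat_r; lra).
    replace (2 * (om * (L * tn) * (5 / 2 * (L * W))) * / (L * W * (L * W))) with (5 * (om * tn) / W) in X1 by (field; lra).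
    assert (X2 : 5 * (om * tn) / W <= 5 * (e * W / 12) / W) by (unfold Rdiv; apply Rmult_le_compat_r; [left; apply Rinv_0_lt_compat; lra|lra]).
    replace (5 * (e * W / 12) / W) with (5 * e / 12) in X2 by (field; lra). lra.
Qed.


Lemma DV_scal u q r v : DV u q (RtoC r * v) = (RtoC r * DV u q v)%C.
Proof. unfold DV. destruct v; apply Ceq; simpl; ring. Qed.

Lemma T5 Om u g1 g2 a b p0 eps tq : setup Om u g1 g2 a b p0 eps -> a < tq < b ->
  Cmod ((g1 tq, g2 tq) - p0) < eps ->
  let w := DV u (g1 tq, g2 tq) (nor g1 g2 tq) in
  forall e, 0 < e -> exists d, 0 < d /\ forall r, r <> 0 -> Rabs r < d ->
  0 < Cmod (Vf u ((g1 tq, g2 tq) + RtoC r * nor g1 g2 tq)) /\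
  Cmod (nrm (Vf u ((g1 tq, g2 tq) + RtoC r * nor g1 g2 tq)) - nrm (RtoC r * w)) < e.
Proof.
  intros HS Htq Hq w e He.
  pose proof (wnz _ _ _ _ _ _ _ _ tq HS Htq Hq) as HW. fold w in HW.
  pose proof HS as [H2 [Hc [HD [HV Heps]]]].
  destruct (tau_ne g1 g2 a b tq Hc Htq) as [_ HT].
  set (q := (g1 tq, g2 tq)) in *.
  set (W := Cmod w) in *.
  set (tn := Cmod (nor g1 g2 tq)).
  assert (Htn : 0 < tn) by (unfold tn; rewrite Cmod_nor; apply sqrt_lt_R0; auto).
  set (om := Rmin (W / (2 * tn)) (e * W / (4 * tn))).
  assert (Hom : 0 < om) by (apply Rmin_pos; apply Rdiv_lt_0_compat; nra).
  assert (om1 : om * tn <= W / 2).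
  { assert (om * tn <= W / (2 * tn) * tn) by (apply Rmult_le_compat_r; [lra|apply Rmin_l]).
    replace (W / (2 * tn) * tn) with (W / 2) in H by (field; lra). auto. }
  assert (om2 : om * tn <= e * W / 4).
  { assert (om * tn <= e * W / (4 * tn) * tn) by (apply Rmult_le_compat_r; [lra|apply Rmin_r]).
    replace (e * W / (4 * tn) * tn) with (e * W / 4) in H by (field; lra). auto. }
  destruct (TE Om u p0 eps q H2 HD Hq om Hom) as [rho [Hrho TEq]].
  exists (rho / tn). split. apply Rdiv_lt_0_compat; auto.
  intros r Hr Hr'.
  set (p := (q + RtoC r * nor g1 g2 tq)%C).
  assert (Epq : (p - q)%C = (RtoC r * nor g1 g2 tq)%C) by (unfold p; destruct q, (nor g1 g2 tq); apply Ceq; simpl; ring).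
  assert (Cpq : Cmod (p - q) = Rabs r * tn) by (rewrite Epq, Cmod_scal; reflexivity).
  assert (HR : 0 < Rabs r) by (apply Rabs_pos_lt; auto).
  assert (Cpq' : Cmod (p - q) < rho).
  { rewrite Cpq. apply Rmult_lt_compat_r with (r := tn) in Hr'; auto.
    replace (rho / tn * tn) with rho in Hr' by (field; lra). auto. }
  assert (Hqq : Cmod (q - q) < rho) by (replace (q - q)%C with (RtoC 0) by (destruct q; apply Ceq; simpl; ring); rewrite Cmod0; lra).
  specialize (TEq p q Cpq' Hqq).
  assert (Vq : Vf u q = RtoC 0) by (apply HV; auto).
  rewrite Cpq, Vq, Epq, DV_scal in TEq. fold w in TEq.
  set (ee := (Vf u p - RtoC 0 - RtoC r * w)%C) in *.
  assert (Eee : Vf u p = (ee + RtoC r * w)%C) by (unfold ee; destruct (Vf u p), w; apply Ceq; simpl; ring).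
  assert (Clw : Cmod (RtoC r * w) = Rabs r * W) by (rewrite Cmod_scal; reflexivity).
  assert (Bee : Cmod ee <= Rabs r * W / 2).
  { assert (om * (Rabs r * tn) = Rabs r * (om * tn)) by ring.
    assert (Rabs r * (om * tn) <= Rabs r * (W / 2)) by (apply Rmult_le_compat_l; lra). lra. }
  assert (PV : 0 < Cmod (Vf u p)).
  { assert (Cmod (RtoC r * w) <= Cmod (Vf u p) + Cmod ee).
    { replace (RtoC r * w)%C with (Vf u p + - ee)%C by (rewrite Eee; destruct ee, w; apply Ceq; simpl; ring).
      eapply Rle_trans; [apply Cmod_triangle|]. rewrite Cmod_opp. lra. }
    assert (0 < Rabs r * W) by (apply Rmult_lt_0_compat; auto). lra. }
  split; auto.
  assert (0 < Rabs r * W) by (apply Rmult_lt_0_compat; auto).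
  eapply Rle_lt_trans; [apply nrm_lip; auto; rewrite Clw; auto|].
  replace (Vf u p - RtoC r * w)%C with ee by (rewrite Eee; destruct ee, w; apply Ceq; simpl; ring).
  rewrite Clw.
  assert (X1 : 2 * Cmod ee / (Rabs r * W) <= 2 * (om * (Rabs r * tn)) / (Rabs r * W)).
  { unfold Rdiv. apply Rmult_le_compat_r; [left; apply Rinv_0_lt_compat; auto|lra]. }
  replace (2 * (om * (Rabs r * tn)) / (Rabs r * W)) with (2 * (om * tn) / W) in X1 by (field; lra).
  assert (X2 : 2 * (om * tn) / W <= 2 * (e * W / 4) / W) by (unfold Rdiv; apply Rmult_le_compat_r; [left; apply Rinv_0_lt_compat; lra|lra]).
  replace (2 * (e * W / 4) / W) with (e / 2) in X2 by (field; lra). lra.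
Qed.


Definition c1 u (p : Complex.C) : Complex.C := (dx (dx u) (fst p) (snd p), dx (dy u) (fst p) (snd p) + 1).
Definition c2 u (p : Complex.C) : Complex.C := (dy (dx u) (fst p) (snd p) - 1, dy (dy u) (fst p) (snd p)).

Definition Zf u p : Complex.C :=
  if Req_EM_T (Cmod (Vf u p)) 0 then (c1 u p * c1 u p + c2 u p * c2 u p)%C else (Vf u p * Vf u p)%C.
Definition Gf u p := nrm (Zf u p).

Lemma Gf_off u p : 0 < Cmod (Vf u p) -> Gf u p = nrm (Vf u p * Vf u p).
Proof. intro H. unfold Gf, Zf. destruct (Req_EM_T (Cmod (Vf u p)) 0); [lra|auto]. Qed.

Lemma Gf_on Om u g1 g2 a b p0 eps tq : setup Om u g1 g2 a b p0 eps -> a < tq < b ->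
  Cmod ((g1 tq, g2 tq) - p0) < eps ->
  Gf u (g1 tq, g2 tq) = nrm (DV u (g1 tq, g2 tq) (nor g1 g2 tq) * DV u (g1 tq, g2 tq) (nor g1 g2 tq)).
Proof.
  intros HS Htq Hq.
  pose proof (DVtau _ _ _ _ _ _ _ _ tq HS Htq Hq) as Ht.
  pose proof (wnz _ _ _ _ _ _ _ _ tq HS Htq Hq) as HW.
  assert (V0 : Vf u (g1 tq, g2 tq) = RtoC 0) by (eapply Vf_trace; eauto).
  pose proof HS as [H2 [Hc _]]. destruct (tau_ne g1 g2 a b tq Hc Htq) as [_ HT].
  unfold Gf, Zf. rewrite V0, Cmod0. destruct (Req_EM_T 0 0) as [_|h]; [|lra].
  set (q := (g1 tq, g2 tq)) in *. set (w := DV u q (nor g1 g2 tq)) in *.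
  set (t1 := Derive g1 tq) in *. set (t2 := Derive g2 tq) in *.
  set (T := t1 ^ 2 + t2 ^ 2) in *.
  assert (Ew : w = (RtoC (- t2) * c1 u q + RtoC t1 * c2 u q)%C).
  { unfold w, DV, nor, c1, c2, t1, t2. apply Ceq; simpl; ring. }
  assert (Et : (RtoC t1 * c1 u q + RtoC t2 * c2 u q)%C = RtoC 0) by (rewrite <- Ht; unfold DV, tau, c1, c2, t1, t2; apply Ceq; simpl; ring).
  assert (E1 : (RtoC T * c1 u q)%C = (RtoC (- t2) * w)%C).
  { replace (RtoC T * c1 u q)%C with (RtoC (- t2) * w + RtoC t1 * (RtoC t1 * c1 u q + RtoC t2 * c2 u q))%C.
    rewrite Et. destruct w; apply Ceq; simpl; ring.
    rewrite Ew. unfold T. destruct (c1 u q), (c2 u q); apply Ceq; simpl; ring. }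
  assert (E2 : (RtoC T * c2 u q)%C = (RtoC t1 * w)%C).
  { replace (RtoC T * c2 u q)%C with (RtoC t1 * w + RtoC t2 * (RtoC t1 * c1 u q + RtoC t2 * c2 u q))%C.
    rewrite Et. destruct w; apply Ceq; simpl; ring.
    rewrite Ew. unfold T. destruct (c1 u q), (c2 u q); apply Ceq; simpl; ring. }
  assert (E : (c1 u q * c1 u q + c2 u q * c2 u q)%C = (RtoC (/ T) * (w * w))%C).
  { assert (F : (RtoC (T * T) * (c1 u q * c1 u q + c2 u q * c2 u q))%C = (RtoC T * (w * w))%C).
    { replace (RtoC (T * T) * (c1 u q * c1 u q + c2 u q * c2 u q))%C with
        ((RtoC T * c1 u q) * (RtoC T * c1 u q) + (RtoC T * c2 u q) * (RtoC T * c2 u q))%C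
        by (destruct (c1 u q), (c2 u q); apply Ceq; simpl; ring).
      rewrite E1, E2. unfold T. destruct w; apply Ceq; simpl; ring. }
    destruct (c1 u q * c1 u q + c2 u q * c2 u q)%C as [z1 z2] eqn:Ez. destruct (w * w)%C as [y1 y2].
    injection F; intros F2 F1. apply Ceq; simpl in *.
    + apply (Rmult_eq_reg_l (T * T)); [|nra]. field_simplify; [|lra]. nra.
    + apply (Rmult_eq_reg_l (T * T)); [|nra]. field_simplify; [|lra]. nra. }
  rewrite E. apply nrm_pos_scal. apply Rinv_0_lt_compat; auto. rewrite Cmod_mult. nra.
Qed.


Lemma Vf_cont Om u g1 g2 a b p0 eps p : setup Om u g1 g2 a b p0 eps -> Cmod (p - p0) < eps ->
  forall e, 0 < e -> exists d, 0 < d /\ forall z, Cmod (z - p) < d -> Cmod (Vf u z - Vf u p) < e.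
Proof.
  intros [H2 [_ [HD _]]] Hp e He. destruct p as [p1 p2].
  destruct (H2 p1 p2 (HD _ Hp)) as [_ [_ [_ [_ [C1 [C2 _]]]]]].
  destruct (cont2_box _ _ _ C1 (e/4) ltac:(lra)) as [d1 [Hd1 E1]].
  destruct (cont2_box _ _ _ C2 (e/4) ltac:(lra)) as [d2 [Hd2 E2]].
  exists (Rmin (Rmin d1 d2) (e/4)). split. repeat apply Rmin_pos; lra.
  intros [z1 z2] Hz.
  assert (Z1 := Cmod_fst ((z1, z2) - (p1, p2))). assert (Z2 := Cmod_snd ((z1, z2) - (p1, p2))).
  simpl in Z1, Z2.
  assert (m1 := Rmin_l (Rmin d1 d2) (e/4)). assert (m2 := Rmin_r (Rmin d1 d2) (e/4)).
  assert (m3 := Rmin_l d1 d2). assert (m4 := Rmin_r d1 d2).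
  specialize (E1 z1 z2 ltac:(unfold Rminus; lra) ltac:(unfold Rminus; lra)).
  specialize (E2 z1 z2 ltac:(unfold Rminus; lra) ltac:(unfold Rminus; lra)).
  eapply Rle_lt_trans; [apply Cmod_sum|]. unfold Vf; simpl.
  replace (dx u z1 z2 - z2 + - (dx u p1 p2 - p2)) with ((dx u z1 z2 - dx u p1 p2) - (z2 + - p2)) by ring.
  replace (dy u z1 z2 + z1 + - (dy u p1 p2 + p1)) with ((dy u z1 z2 - dy u p1 p2) + (z1 + - p1)) by ring.
  pose proof (Rabs_triang (dy u z1 z2 - dy u p1 p2) (z1 + - p1)).
  pose proof (Rabs_triang (dx u z1 z2 - dx u p1 p2) (- (z2 + - p2))). rewrite Rabs_Ropp in H0.
  unfold Rminus in *. lra.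
Qed.

Definition HZ u g1 g2 a b p0 eps := forall p, Cmod (p - p0) < eps -> Cmod (Vf u p) = 0 ->
  exists tq, a < tq < b /\ p = (g1 tq, g2 tq).

Lemma G_unit Om u g1 g2 a b p0 eps : setup Om u g1 g2 a b p0 eps -> HZ u g1 g2 a b p0 eps ->
  unitD (Gf u) p0 eps.
Proof.
  intros HS Hz q Hq. destruct (Req_dec (Cmod (Vf u q)) 0) as [h|h].
  - destruct (Hz q Hq h) as [tq [Htq ->]].
    rewrite (Gf_on _ _ _ _ _ _ _ _ tq HS Htq Hq). apply nrm_unit. rewrite Cmod_mult.
    pose proof (wnz _ _ _ _ _ _ _ _ tq HS Htq Hq). nra.
  - assert (0 < Cmod (Vf u q)) by (pose proof (Cmod_ge_0 (Vf u q)); lra).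
    rewrite Gf_off by auto. apply nrm_unit. rewrite Cmod_mult. nra.
Qed.

Lemma G_cont Om u g1 g2 a b p0 eps : setup Om u g1 g2 a b p0 eps -> HZ u g1 g2 a b p0 eps ->
  contD (Gf u) p0 eps.
Proof.
  intros HS Hz p Hp e He. destruct (Req_dec (Cmod (Vf u p)) 0) as [h|h].
  - destruct (Hz p Hp h) as [tq [Htq Ep]]. subst p.
    destruct (T4 _ _ _ _ _ _ _ _ tq HS Htq Hp (e/2) ltac:(lra)) as [d [Hd T4p]].
    set (d' := Rmin d (eps - Cmod ((g1 tq, g2 tq) - p0))).
    assert (Hd' : 0 < d') by (apply Rmin_pos; lra).
    exists d'. split; auto. intros z Hzp.
    assert (zd : Cmod (z - (g1 tq, g2 tq)) < d) by (eapply Rlt_le_trans; [exact Hzp|apply Rmin_l]).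
    assert (zD : Cmod (z - p0) < eps).
    { eapply Rle_lt_trans; [apply Cmod_tri with (y := (g1 tq, g2 tq))|].
      assert (d' <= eps - Cmod ((g1 tq, g2 tq) - p0)) by apply Rmin_r. lra. }
    rewrite (Gf_on _ _ _ _ _ _ _ _ tq HS Htq Hp).
    destruct (Req_dec (Cmod (Vf u z)) 0) as [hz|hz].
    + destruct (Hz z zD hz) as [tz [Htz Ez]]. subst z.
      rewrite (Gf_on _ _ _ _ _ _ _ _ tz HS Htz zD).
      destruct (T4 _ _ _ _ _ _ _ _ tz HS Htz zD (e/2) ltac:(lra)) as [dz [Hdz T4z]].
      destruct (T5 _ _ _ _ _ _ _ _ tz HS Htz zD 1 ltac:(lra)) as [d5 [Hd5 T5z]].
      destruct HS as [_ [Hc _]]. destruct (tau_ne g1 g2 a b tz Hc Htz) as [_ HT].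
      set (tnz := Cmod (nor g1 g2 tz)).
      assert (Htn : 0 < tnz) by (unfold tnz; rewrite Cmod_nor; apply sqrt_lt_R0; auto).
      set (rho := d - Cmod ((g1 tz, g2 tz) - (g1 tq, g2 tq))).
      assert (Hrho : 0 < rho) by (unfold rho; lra).
      set (mm := Rmin dz (Rmin rho (d5 * tnz))).
      assert (Hmm : 0 < mm) by (unfold mm; repeat apply Rmin_pos; nra).
      set (r := mm / (2 * tnz)).
      assert (Hr : 0 < r) by (unfold r; apply Rdiv_lt_0_compat; lra).
      assert (rt : r * tnz = mm / 2) by (unfold r; field; lra).
      assert (Hr5 : Rabs r < d5).
      { rewrite Rabs_right by lra. assert (mm <= d5 * tnz) by (unfold mm; eapply Rle_trans; [apply Rmin_r|apply Rmin_r]).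
        assert (r * tnz < d5 * tnz) by lra. apply Rmult_lt_reg_r with tnz; auto. }
      destruct (T5z r ltac:(lra) Hr5) as [PV _].
      set (z' := ((g1 tz, g2 tz) + RtoC r * nor g1 g2 tz)%C) in *.
      assert (Cz : Cmod (z' - (g1 tz, g2 tz)) = r * tnz).
      { unfold z'. replace ((g1 tz, g2 tz) + RtoC r * nor g1 g2 tz - (g1 tz, g2 tz))%C with (RtoC r * nor g1 g2 tz)%C
          by (destruct (nor g1 g2 tz); apply Ceq; simpl; ring).
        rewrite Cmod_scal, Rabs_right by lra. reflexivity. }
      assert (m1 : mm <= dz) by apply Rmin_l.
      assert (m2 : mm <= rho) by (unfold mm; eapply Rle_trans; [apply Rmin_r|apply Rmin_l]).
      assert (A1 := T4z z' ltac:(lra) PV).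
      assert (A2 : Cmod (nrm (Vf u z' * Vf u z') - nrm (DV u (g1 tq, g2 tq) (nor g1 g2 tq) * DV u (g1 tq, g2 tq) (nor g1 g2 tq))) < e/2).
      { apply T4p; auto. eapply Rle_lt_trans; [apply Cmod_tri with (y := (g1 tz, g2 tz))|]. unfold rho in m2. lra. }
      eapply Rle_lt_trans; [apply Cmod_tri with (y := nrm (Vf u z' * Vf u z'))|].
      rewrite Cmod_sym. lra.
    + assert (0 < Cmod (Vf u z)) by (pose proof (Cmod_ge_0 (Vf u z)); lra).
      rewrite Gf_off by auto. assert (T := T4p z zd H). lra.
  - assert (HV : 0 < Cmod (Vf u p)) by (pose proof (Cmod_ge_0 (Vf u p)); lra).
    set (M := Cmod (Vf u p)) in *.
    set (e' := Rmin (Rmin (M / 2) 1) (e * M * M / (4 * (2 * M + 1)))).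
    assert (He' : 0 < e') by (apply Rmin_pos; [apply Rmin_pos; lra|]; apply Rdiv_lt_0_compat; [|lra]; apply Rmult_lt_0_compat; nra).
    destruct (Vf_cont _ _ _ _ _ _ _ _ p HS Hp e' He') as [d [Hd Vc]].
    exists d. split; auto. intros z Hzp. specialize (Vc z Hzp).
    assert (e1 : e' <= M / 2) by (eapply Rle_trans; apply Rmin_l).
    assert (e3 : e' <= 1) by (eapply Rle_trans; [apply Rmin_l|apply Rmin_r]). assert (e2 : e' <= e * M * M / (4 * (2 * M + 1))) by apply Rmin_r.
    assert (Hz1 : M <= Cmod (Vf u z) + Cmod (Vf u z - Vf u p)).
    { pose proof (Cmod_rev (Vf u p) (Vf u z)) as R. rewrite Cmod_sym in R. fold M in R.
      apply Rabs_le_between in R. lra. }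
    assert (Hz0 : 0 < Cmod (Vf u z)) by lra.
    rewrite !Gf_off by auto.
    eapply Rle_lt_trans; [apply nrm_lip; rewrite Cmod_mult; fold M; nra|].
    rewrite Cdiff_sq, !Cmod_mult. fold M.
    assert (S : Cmod (Vf u z + Vf u p) <= 2 * M + 1).
    { replace (Vf u z + Vf u p)%C with ((Vf u z - Vf u p) + (Vf u p + Vf u p))%C by (destruct (Vf u z), (Vf u p); apply Ceq; simpl; ring).
      eapply Rle_trans; [apply Cmod_triangle|]. rewrite Cmod_2x. fold M. lra. }
    assert (P : Cmod (Vf u z - Vf u p) * Cmod (Vf u z + Vf u p) <= e' * (2 * M + 1)).
    { apply Rmult_le_compat; try apply Cmod_ge_0; lra. }
    assert (Q : e' * (2 * M + 1) <= e * M * M / 4).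
    { assert (e' * (2 * M + 1) <= e * M * M / (4 * (2 * M + 1)) * (2 * M + 1)) by (apply Rmult_le_compat_r; lra).
      replace (e * M * M / (4 * (2 * M + 1)) * (2 * M + 1)) with (e * M * M / 4) in H by (field; lra). auto. }
    assert (MM : 0 < M * M) by nra.
    unfold Rdiv. 
    assert (X : 2 * (Cmod (Vf u z - Vf u p) * Cmod (Vf u z + Vf u p)) * / (M * M) <= 2 * (e * M * M / 4) * / (M * M)).
    { apply Rmult_le_compat_r. left; apply Rinv_0_lt_compat; auto. lra. }
    replace (2 * (e * M * M / 4) * / (M * M)) with (e / 2) in X by (field; lra). lra.
Qed.


Lemma disk_iff p0 e p : 0 < e -> (disk p0 e p <-> Cmod (p - p0) < e).
Proof.
  intro He. unfold disk, Cmod; simpl. replace (fst p + - fst p0) with (fst p - fst p0) by ring.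
  replace (snd p + - snd p0) with (snd p - snd p0) by ring.
  split; intro H.
  - rewrite <- (sqrt_pow2 e) by lra. apply sqrt_lt_1_alt. split. pose proof (Rle_0_sqr (fst p - fst p0)); pose proof (Rle_0_sqr (snd p - snd p0)); unfold Rsqr in *; lra. simpl; lra.
  - assert (0 <= (fst p - fst p0) * ((fst p - fst p0) * 1) + (snd p - snd p0) * ((snd p - snd p0) * 1)) by (pose proof (Rle_0_sqr (fst p - fst p0)); pose proof (Rle_0_sqr (snd p - snd p0)); unfold Rsqr in *; lra).
    apply sqrt_lt_0_alt. replace (sqrt (e * (e * 1))) with e. lra. rewrite <- (sqrt_pow2 e) at 1 by lra. f_equal.
Qed.

Lemma sign_split (N H : Complex.C) : (N * N)%C = (H * H)%C -> N = H \/ N = (- H)%C.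
Proof.
  intro E. assert (E' : ((N - H) * (N + H))%C = RtoC 0) by (rewrite <- Cdiff_sq, E; destruct H; apply Ceq; simpl; ring).
  apply (f_equal Cmod) in E'. rewrite Cmod_mult, Cmod0 in E'.
  destruct (Rmult_integral _ _ E') as [h|h]; apply Cmod_eq_0 in h.
  - left. destruct N, H; injection h; intros; apply Ceq; simpl in *; lra.
  - right. destruct N, H; injection h; intros; apply Ceq; simpl in *; lra.
Qed.

Definition ctsat (F : Complex.C -> Complex.C) p :=
  forall e, 0 < e -> exists d, 0 < d /\ forall z, Cmod (z - p) < d -> Cmod (F z - F p) < e.

Lemma ct_lt1 F1 F2 p : ctsat F1 p -> ctsat F2 p -> Cmod (F1 p - F2 p) < 1 ->
  exists d, 0 < d /\ forall z, Cmod (z - p) < d -> Cmod (F1 z - F2 z) < 1.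
Proof.
  intros C1 C2 H. set (s := 1 - Cmod (F1 p - F2 p)).
  destruct (C1 (s/2) ltac:(unfold s; lra)) as [d1 [Hd1 E1]].
  destruct (C2 (s/2) ltac:(unfold s; lra)) as [d2 [Hd2 E2]].
  exists (Rmin d1 d2). split. apply Rmin_pos; auto. intros z Hz.
  specialize (E1 z ltac:(eapply Rlt_le_trans; [exact Hz|apply Rmin_l])).
  specialize (E2 z ltac:(eapply Rlt_le_trans; [exact Hz|apply Rmin_r])).
  eapply Rle_lt_trans; [apply Cmod_tri with (y := F1 p)|].
  eapply Rle_lt_trans; [apply Rplus_le_compat_l, Cmod_tri with (y := F2 p)|].
  rewrite (Cmod_sym (F2 p)). unfold s in *. lra.
Qed.

Lemma ct_opp F p : ctsat F p -> ctsat (fun z => (- F z)%C) p.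
Proof.
  intros C e He. destruct (C e He) as [d [Hd E]]. exists d. split; auto. intros z Hz.
  replace (- F z - - F p)%C with (- (F z - F p))%C by (destruct (F z), (F p); apply Ceq; simpl; ring).
  rewrite Cmod_opp. auto.
Qed.

Lemma ct_nrm Om u g1 g2 a b p0 eps p : setup Om u g1 g2 a b p0 eps -> Cmod (p - p0) < eps -> 0 < Cmod (Vf u p) ->
  ctsat (fun z => nrm (Vf u z)) p /\ exists d, 0 < d /\ forall z, Cmod (z - p) < d -> 0 < Cmod (Vf u z).
Proof.
  intros HS Hp HV. set (M := Cmod (Vf u p)) in *.
  split.
  - intros e He.
    destruct (Vf_cont _ _ _ _ _ _ _ _ p HS Hp (Rmin (M/2) (e * M / 4)) ltac:(apply Rmin_pos; nra)) as [d [Hd E]].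
    exists d. split; auto. intros z Hz. specialize (E z Hz).
    assert (E1 : Cmod (Vf u z - Vf u p) < M / 2) by (eapply Rlt_le_trans; [exact E|apply Rmin_l]).
    assert (E2 : Cmod (Vf u z - Vf u p) < e * M / 4) by (eapply Rlt_le_trans; [exact E|apply Rmin_r]).
    pose proof (Cmod_rev (Vf u p) (Vf u z)) as R. rewrite Cmod_sym in R. fold M in R. apply Rabs_le_between in R.
    eapply Rle_lt_trans; [apply nrm_lip; [lra|auto]|]. fold M.
    apply Rmult_lt_reg_r with M; auto. unfold Rdiv. rewrite Rmult_assoc, Rinv_l by lra. lra.
  - destruct (Vf_cont _ _ _ _ _ _ _ _ p HS Hp (M/2) ltac:(lra)) as [d [Hd E]].
    exists d. split; auto. intros z Hz. specialize (E z Hz).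
    pose proof (Cmod_rev (Vf u p) (Vf u z)) as R. rewrite Cmod_sym in R. fold M in R. apply Rabs_le_between in R. lra.
Qed.

Lemma lim_from (B : Complex.C -> Prop) u (H : Complex.C -> Complex.C) (s : R) p0 :
  Rabs s = 1 -> (forall p, B p -> Nu u p = (RtoC s * H p)%C) -> ctsat H p0 ->
  filterlim (Nu u) (within B (locally p0)) (locally (RtoC s * H p0)%C).
Proof.
  intros Hs HB HC. apply filterlim_locally. intro e.
  destruct (HC e (cond_pos e)) as [d [Hd E]].
  exists (mkposreal (d/2) ltac:(lra)). intros y Hy By. simpl in Hy. destruct Hy as [Hy1 Hy2].
  rewrite HB by auto.
  assert (Cy : Cmod (y - p0) < d).
  { eapply Rle_lt_trans; [apply Cmod_sum|]. simpl. change (Rabs (fst y - fst p0) < d/2) in Hy1.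
    change (Rabs (snd y - snd p0) < d/2) in Hy2. unfold Rminus in *. lra. }
  specialize (E y Cy).
  assert (Cz : Cmod (RtoC s * H y - RtoC s * H p0) < e).
  { replace (RtoC s * H y - RtoC s * H p0)%C with (RtoC s * (H y - H p0))%C by (destruct (H y), (H p0); apply Ceq; simpl; ring).
    rewrite Cmod_scal, Hs. lra. }
  split.
  - change (Rabs (fst (RtoC s * H y)%C - fst (RtoC s * H p0)%C) < e).
    eapply Rle_lt_trans; [|exact Cz]. apply (Cmod_fst (RtoC s * H y - RtoC s * H p0)%C).
  - change (Rabs (snd (RtoC s * H y)%C - snd (RtoC s * H p0)%C) < e).
    eapply Rle_lt_trans; [|exact Cz]. apply (Cmod_snd (RtoC s * H y - RtoC s * H p0)%C).
Qed.


Theorem proposition3p5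
  (Om : R * R -> Prop) (u : R -> R -> R)
  (g1 g2 : R -> R) (a b : R) (p0 : R * R) (eps : R)
  (Bp Bm : R * R -> Prop) :
  domain2 Om ->
  C2_on Om u ->
  regular_C1_curve g1 g2 a b ->
  (forall p, trace g1 g2 a b p -> Sing Om u p) ->
  trace g1 g2 a b p0 ->
  0 < eps ->
  (forall p, disk p0 eps p -> Om p) ->
  (forall p, (disk p0 eps p /\ ~ trace g1 g2 a b p) <-> (Bp p \/ Bm p)) ->
  (forall p, ~ (Bp p /\ Bm p)) ->
  domain2 Bp -> domain2 Bm ->
  (forall p, Bp p -> ~ Sing Om u p) ->
  (forall p, Bm p -> ~ Sing Om u p) ->
  exists Lp Lm : R * R,
    filterlim (Nu u) (within Bp (locally p0)) (locally Lp) /\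
    filterlim (Nu u) (within Bm (locally p0)) (locally Lm) /\
    Lp = (- fst Lm, - snd Lm).
Proof.
  intros HOm H2 Hc Htr Hp0 He HD Hiff Hdisj HBp HBm HnBp HnBm.
  assert (HD' : forall p, Cmod (p - p0) < eps -> Om p) by (intros p Hp; apply HD, disk_iff; auto).
  assert (Sing_iff : forall p, Om p -> (Sing Om u p <-> Cmod (Vf u p) = 0)).
  { intros p Hp. unfold Sing, Vf. split.
    - intros [_ [E1 E2]]. replace (dx u (fst p) (snd p) - snd p, dy u (fst p) (snd p) + fst p) with (RtoC 0)
        by (apply Ceq; simpl; lra). apply Cmod0.
    - intro E. apply Cmod_eq_0 in E. injection E; intros; auto. }
  assert (HV : forall t, a < t < b -> Vf u (g1 t, g2 t) = RtoC 0).
  { intros t Ht. assert (S := Htr (g1 t, g2 t) ltac:(exists t; auto)).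
    destruct S as [Sm [E1 E2]]. unfold Vf. apply Ceq; simpl in *; lra. }
  assert (HS : setup Om u g1 g2 a b p0 eps) by (unfold setup; split; [auto|split; [auto|split; [auto|split; auto]]]).
  assert (tr_V : forall p, trace g1 g2 a b p -> Vf u p = RtoC 0).
  { intros p [t [Ht ->]]. apply HV; auto. }
  assert (Hz : HZ u g1 g2 a b p0 eps).
  { intros p Hp HVp. destruct (classic (trace g1 g2 a b p)) as [[t [Ht Et]]|nt].
    - exists t; auto.
    - exfalso. assert (Hpd : disk p0 eps p) by (apply disk_iff; auto).
      destruct (proj1 (Hiff p) (conj Hpd nt)) as [B|B].
      + apply (HnBp p B). apply Sing_iff; auto.
      + apply (HnBm p B). apply Sing_iff; auto. }
  assert (offV : forall p, Bp p \/ Bm p -> Cmod (p - p0) < eps /\ 0 < Cmod (Vf u p)).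
  { intros p HB. destruct (proj2 (Hiff p) HB) as [Hpd nt]. apply disk_iff in Hpd; auto. split; auto.
    destruct (Cmod_ge_0 (Vf u p)) as [h|h]; auto. exfalso.
    destruct HB as [B|B]; [apply (HnBp p B)|apply (HnBm p B)]; apply Sing_iff; auto. }
  pose proof (G_unit _ _ _ _ _ _ _ _ HS Hz) as GU.
  pose proof (G_cont _ _ _ _ _ _ _ _ HS Hz) as GC.
  set (H := liftH (Gf u) p0).
  assert (HU : forall p, Cmod (p - p0) < eps -> Cmod (H p) = 1 /\ (H p * H p)%C = Gf u p)
    by (intros p Hp; apply (liftH_spec _ _ eps); auto).
  assert (HC : contD H p0 eps) by (apply liftH_cont; auto).
  assert (NH : forall p, Cmod (p - p0) < eps -> 0 < Cmod (Vf u p) -> nrm (Vf u p) = H p \/ nrm (Vf u p) = (- H p)%C).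
  { intros p Hp HVp. apply sign_split. rewrite <- nrm_mult by auto. rewrite <- Gf_off by auto. symmetry; apply HU; auto. }
  set (Op := fun p => Cmod (p - p0) < eps /\ 0 < Cmod (Vf u p) /\ Cmod (nrm (Vf u p) - H p) < 1).
  set (Omn := fun p => Cmod (p - p0) < eps /\ 0 < Cmod (Vf u p) /\ Cmod (nrm (Vf u p) - (- H p)) < 1).
  assert (openO : forall (F : Complex.C -> Complex.C), (forall p, Cmod (p - p0) < eps -> ctsat F p) ->
     open2 (fun p => Cmod (p - p0) < eps /\ 0 < Cmod (Vf u p) /\ Cmod (nrm (Vf u p) - F p) < 1)).
  { intros F HF p [Hp [HVp HN]].
    destruct (ct_nrm _ _ _ _ _ _ _ _ p HS Hp HVp) as [CN [d1 [Hd1 E1]]].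
    destruct (ct_lt1 _ _ p CN (HF p Hp) HN) as [d2 [Hd2 E2]].
    set (d3 := eps - Cmod (p - p0)).
    exists (Rmin (Rmin d1 d2) d3). split. repeat apply Rmin_pos; unfold d3; lra.
    intros q Hq. apply disk_iff in Hq; [|repeat apply Rmin_pos; unfold d3; lra].
    assert (m1 := Rmin_l (Rmin d1 d2) d3). assert (m2 := Rmin_r (Rmin d1 d2) d3).
    assert (m3 := Rmin_l d1 d2). assert (m4 := Rmin_r d1 d2).
    split; [|split].
    - eapply Rle_lt_trans; [apply Cmod_tri with (y := p)|]. unfold d3 in *. lra.
    - apply E1; lra.
    - apply E2; lra. }
  assert (OpO : open2 Op).
  { apply (openO H). intros p Hp e' He'. apply (HC p Hp e' He'). }
  assert (OmO : open2 Omn).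
  { apply (openO (fun z => (- H z)%C)). intros p Hp. apply ct_opp. intros e' He'. apply (HC p Hp e' He'). }
  assert (notboth : forall p, Op p -> Omn p -> False).
  { intros p [Hp [_ A]] [_ [_ B]].
    assert (Cmod (H p + H p) <= Cmod (nrm (Vf u p) - - H p) + Cmod (nrm (Vf u p) - H p)).
    { replace (H p + H p)%C with ((nrm (Vf u p) - - H p) - (nrm (Vf u p) - H p))%C
        by (destruct (nrm (Vf u p)), (H p); apply Ceq; simpl; ring).
      replace (nrm (Vf u p) - - H p - (nrm (Vf u p) - H p))%C with ((nrm (Vf u p) - - H p) + - (nrm (Vf u p) - H p))%C
        by (destruct (nrm (Vf u p)), (H p); apply Ceq; simpl; ring).
      eapply Rle_trans; [apply Cmod_triangle|]. rewrite Cmod_opp. lra. }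
    rewrite Cmod_2x, (proj1 (HU p Hp)) in H0. lra. }
  assert (sides : forall B : Complex.C -> Prop, domain2 B -> (forall p, B p -> Bp p \/ Bm p) ->
     exists s, (s = 1 \/ s = -1) /\ forall p, B p -> nrm (Vf u p) = (RtoC s * H p)%C).
  { intros B [_ [Bc [x Bx]]] Bsub.
    assert (cover : forall p, B p -> Op p \/ Omn p).
    { intros p Bpp. destruct (offV p (Bsub p Bpp)) as [Hp HVp]. destruct (NH p Hp HVp) as [E|E].
      - left. split; [auto|split; [auto|]]. rewrite E. replace (H p - H p)%C with (RtoC 0) by (destruct (H p); apply Ceq; simpl; ring). rewrite Cmod0; lra.
      - right. split; [auto|split; [auto|]]. rewrite E. replace (- H p - - H p)%C with (RtoC 0) by (destruct (H p); apply Ceq; simpl; ring). rewrite Cmod0; lra. }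
    assert (toEq : forall p, B p -> Op p -> nrm (Vf u p) = H p).
    { intros p Bpp Opp. destruct (offV p (Bsub p Bpp)) as [Hp HVp]. destruct (NH p Hp HVp) as [E|E]; auto.
      exfalso. apply (notboth p Opp). split; [auto|split; [auto|]]. rewrite E. replace (- H p - - H p)%C with (RtoC 0) by (destruct (H p); apply Ceq; simpl; ring). rewrite Cmod0; lra. }
    assert (toOpp : forall p, B p -> Omn p -> nrm (Vf u p) = (- H p)%C).
    { intros p Bpp Opp. destruct (offV p (Bsub p Bpp)) as [Hp HVp]. destruct (NH p Hp HVp) as [E|E]; auto.
      exfalso. apply (notboth p); auto. split; [auto|split; [auto|]]. rewrite E. replace (H p - H p)%C with (RtoC 0) by (destruct (H p); apply Ceq; simpl; ring). rewrite Cmod0; lra. }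
    destruct (classic (exists p, B p /\ Op p)) as [EP|NP]; destruct (classic (exists p, B p /\ Omn p)) as [EM|NM].
    - exfalso. destruct (Bc Op Omn OpO OmO cover EP EM) as [p [_ [A1 A2]]]. apply (notboth p); auto.
    - exists 1. split; auto. intros p Bpp. destruct (cover p Bpp) as [O|O].
      + rewrite toEq by auto. destruct (H p); apply Ceq; simpl; ring.
      + exfalso; apply NM; exists p; auto.
    - exists (-1). split; auto. intros p Bpp. destruct (cover p Bpp) as [O|O].
      + exfalso; apply NP; exists p; auto.
      + rewrite toOpp by auto. destruct (H p); apply Ceq; simpl; ring.
    - exfalso. destruct (cover x Bx) as [O|O]; [apply NP|apply NM]; exists x; auto. }
  destruct (sides Bp HBp ltac:(auto)) as [sp [Hsp Ep]].
  destruct (sides Bm HBm ltac:(auto)) as [sm [Hsm Em]].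
  assert (p0D : Cmod (p0 - p0) < eps) by (replace (p0 - p0)%C with (RtoC 0) by (destruct p0; apply Ceq; simpl; ring); rewrite Cmod0; lra).
  assert (ctH : ctsat H p0) by (intros e' He'; apply (HC p0 p0D e' He')).
  assert (Rabs sp = 1) by (destruct Hsp as [->| ->]; [apply Rabs_R1|rewrite Rabs_left; lra]).
  assert (Rabs sm = 1) by (destruct Hsm as [->| ->]; [apply Rabs_R1|rewrite Rabs_left; lra]).
  exists (RtoC sp * H p0)%C, (RtoC sm * H p0)%C. split; [|split].
  - apply lim_from; auto. intros p Bpp. rewrite Nu_nrm. auto.
  - apply lim_from; auto. intros p Bpp. rewrite Nu_nrm. auto.
  -
    assert (Hne : sp <> sm).
    { intro Es. subst sm.
      assert (all : forall p, Cmod (p - p0) < eps -> 0 < Cmod (Vf u p) -> nrm (Vf u p) = (RtoC sp * H p)%C).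
      { intros p Hp HVp. assert (nt : ~ trace g1 g2 a b p).
        { intro T. rewrite (tr_V p T), Cmod0 in HVp. lra. }
        destruct (proj1 (Hiff p) (conj (proj2 (disk_iff p0 eps p He) Hp) nt)) as [B|B]; auto. }
      destruct Hp0 as [t0 [Ht0 Ep0]].
      assert (q0D : Cmod ((g1 t0, g2 t0) - p0) < eps) by (rewrite <- Ep0; auto).
      destruct (T5 _ _ _ _ _ _ _ _ t0 HS Ht0 q0D (1/2) ltac:(lra)) as [d5 [Hd5 T5p]].
      destruct (ctH (1/2) ltac:(lra)) as [dH [HdH EH]].
      destruct (tau_ne g1 g2 a b t0 Hc Ht0) as [_ HT].
      set (tn := Cmod (nor g1 g2 t0)).
      assert (Htn : 0 < tn) by (unfold tn; rewrite Cmod_nor; apply sqrt_lt_R0; auto).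
      set (mm := Rmin (d5 * tn) (Rmin dH eps)).
      assert (Hmm : 0 < mm) by (unfold mm; repeat apply Rmin_pos; nra).
      set (r := mm / (2 * tn)).
      assert (Hr : 0 < r) by (unfold r; apply Rdiv_lt_0_compat; lra).
      assert (rt : r * tn = mm / 2) by (unfold r; field; lra).
      assert (m1 : mm <= d5 * tn) by apply Rmin_l.
      assert (m2 : mm <= dH) by (unfold mm; eapply Rle_trans; [apply Rmin_r|apply Rmin_l]).
      assert (m3 : mm <= eps) by (unfold mm; eapply Rle_trans; [apply Rmin_r|apply Rmin_r]).
      assert (rd : r < d5) by (apply Rmult_lt_reg_r with tn; auto; lra).
      set (w0 := DV u (g1 t0, g2 t0) (nor g1 g2 t0)) in *.
      pose proof (wnz _ _ _ _ _ _ _ _ t0 HS Ht0 q0D) as HW. fold w0 in HW.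
      assert (pt_d : forall s, Rabs s = r -> Cmod ((g1 t0, g2 t0) + RtoC s * nor g1 g2 t0 - p0) = r * tn).
      { intros s Hs. rewrite <- Ep0. replace (p0 + RtoC s * nor g1 g2 t0 - p0)%C with (RtoC s * nor g1 g2 t0)%C
          by (destruct p0, (nor g1 g2 t0); apply Ceq; simpl; ring). rewrite Cmod_scal, Hs. reflexivity. }
      destruct (T5p r ltac:(lra) ltac:(rewrite Rabs_right; lra)) as [PV1 PN1].
      destruct (T5p (- r) ltac:(lra) ltac:(rewrite Rabs_Ropp, Rabs_right; lra)) as [PV2 PN2].
      set (z1 := ((g1 t0, g2 t0) + RtoC r * nor g1 g2 t0)%C) in *.
      set (z2 := ((g1 t0, g2 t0) + RtoC (- r) * nor g1 g2 t0)%C) in *.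
      assert (D1 : Cmod (z1 - p0) = r * tn) by (apply pt_d; rewrite Rabs_right; lra).
      assert (D2 : Cmod (z2 - p0) = r * tn) by (apply pt_d; rewrite Rabs_Ropp, Rabs_right; lra).
      assert (A1 := all z1 ltac:(lra) PV1). assert (A2 := all z2 ltac:(lra) PV2).
      rewrite nrm_pos_scal in PN1 by auto. rewrite nrm_neg_scal in PN2 by (auto; lra).
      rewrite A1 in PN1. rewrite A2 in PN2.
      assert (HH1 := EH z1 ltac:(lra)). assert (HH2 := EH z2 ltac:(lra)).
      assert (Hsp1 : forall z, Cmod (RtoC sp * H z - RtoC sp * H p0) = Cmod (H z - H p0)).
      { intro z. replace (RtoC sp * H z - RtoC sp * H p0)%C with (RtoC sp * (H z - H p0))%C
          by (destruct (H z), (H p0); apply Ceq; simpl; ring). rewrite Cmod_scal, H0. ring. }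
      assert (X1 : Cmod (RtoC sp * H p0 - nrm w0) < 1).
      { eapply Rle_lt_trans; [apply Cmod_tri with (y := (RtoC sp * H z1)%C)|].
        rewrite Cmod_sym, Hsp1. lra. }
      assert (X2 : Cmod (RtoC sp * H p0 - - nrm w0) < 1).
      { eapply Rle_lt_trans; [apply Cmod_tri with (y := (RtoC sp * H z2)%C)|].
        rewrite Cmod_sym, Hsp1. lra. }
      assert (Y : Cmod (nrm w0 + nrm w0) <= Cmod (RtoC sp * H p0 - - nrm w0) + Cmod (RtoC sp * H p0 - nrm w0)).
      { replace (nrm w0 + nrm w0)%C with ((RtoC sp * H p0 - - nrm w0) + - (RtoC sp * H p0 - nrm w0))%C
          by (destruct (H p0), (nrm w0); apply Ceq; simpl; ring).
        eapply Rle_trans; [apply Cmod_triangle|]. rewrite Cmod_opp. lra. }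
      rewrite Cmod_2x, nrm_unit in Y by auto. lra. }
    assert (Em' : sm = - sp) by (destruct Hsp as [-> | ->]; destruct Hsm as [-> | ->]; lra).
    rewrite Em'. destruct (H p0); apply Ceq; simpl; ring.
Qed.
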